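(* Let $G=(V,q)$ be a reversible connected graph with non-negative Ollivier curvature, and let $\widetilde G=(V\times V,\widetilde q)$ be a perfect coupling graph of $G$ with Laplacian $\widetilde\Delta$. Define $u_t:V\times V\to[0,1]$ by $u_t(x,y):=\phi_t(d(x,y))$. Then $\partial_tu_t\ge\widetilde\Delta u_t$ on $V\times V$ for all $t>0$.
   Context: A graph $G=(V,q)$ consists of a countable set $V$ and a function $q:V\times V\to[0,\infty)$ such that $\#\{y:q(x,y)>0\}<\infty$ for every $x\in V$; its Laplacian is $\Delta f(x)=\sum_y q(x,y)(f(y)-f(x))$. $G$ is reversible if there is $m:V\to(0,\infty)$ with $q(x,y)m(x)=q(y,x)m(y)$. For reversible $G$, $x\sim y$ means $q(x,y)>0$ and $d$ is the combinatorial graph distance (finite since $G$ is connected). $q_{\min}:=\inf\{q(x,y):q(x,y)>0\}$. Ollivier curvature: for $x\ne y$ and $f:V\to\mathbb R$ let $\nabla_{xy}f=(f(x)-f(y))/d(x,y)$, $\|\nabla f\|_\infty=\sup_{x\ne y}|\nabla_{xy}f|$, and $\kappa(x,y)=\inf\{\nabla_{xy}\Delta f:\ \|\nabla f\|_\infty=1,\ \nabla_{yx}f=1\}$. Non-negative Ollivier curvature means $\kappa(x,y)\ge0$ for all $x\ne y$. $(f\otimes g)(x,y)=f(x)g(y)$. A graph $\widetilde G=(V\times V,\widetilde q)$ with Laplacian $\widetilde\Delta$ is a coupling graph of $G$ if $\widetilde\Delta(f\otimes 1)=\Delta f\otimes 1$ and $\widetilde\Delta(1\otimes f)=1\otimes\Delta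 f$ for all $f$. A transport plan from $x_0$ to $y_0$ is $\rho:V\times V\to[0,\infty)$ with $\sum_{y}\rho(x,y)=q(x_0,x)$ for $x\neq x_0$ and $\sum_x\rho(x,y)=q(y_0,y)$ for $y\ne y_0$; $\mathrm{cost}(\rho)=\sum_{x,y}\rho(x,y)(d(x_0,y_0)-d(x,y))$; $\mu_\rho(k)=\sum_{d(x,y)-d(x_0,y_0)=k}\rho(x,y)$; $\rho$ is optimal if it maximizes cost. A coupling graph is perfect if for all $x_0,y_0$ the plan $\rho_{x_0y_0}:=\widetilde q((x_0,y_0),(\cdot,\cdot))$ is optimal, has $\mu_{\rho_{x_0y_0}}(k)=0$ for $|k|>1$, and has $\mu_{\rho_{x_0y_0}}(-1)\ge 2q_{\min}$ when $x_0\ne y_0$. $\phi_t(n):=P^{\mathbb N_0}_t1_{\mathbb N_+}(n)$, where $P^{\mathbb N_0}_t$ is the heat semigroup (minimal, defined by finite-set exhaustion) of the graph on $\mathbb N_0$ with rates $q_0(x,y)=2q_{\min}$ if $|x-y|=1$ and $x>0$, and $0$ otherwise. *)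

(* Defs.v *)
From Stdlib Require Import Reals Lra Lia ZArith Arith List Classical ClassicalEpsilon.
Open Scope R_scope.

Definition sum_fin {A : Type} (g : A -> R) (c : R) : Prop :=
  exists l : list A, NoDup l /\ (forall a, g a <> 0 -> In a l) /\
    c = fold_right (fun a s => g a + s) 0 l.

Definition fsum {A : Type} (g : A -> R) : R :=
  epsilon (inhabits 0) (sum_fin g).

Definition countable (V : Type) : Prop :=
  exists enc : V -> nat, forall x y, enc x = enc y -> x = y.

Definition is_graph {V : Type} (q : V -> V -> R) : Prop :=
  (forall x y, 0 <= q x y) /\
  (forall x, exists l : list V, forall y, 0 < q x y -> In y l).

Definition lap {V : Type} (q : V -> V -> R) (f : V -> R) (x : V) : R :=
  fsum (fun y => q x y * (f y - f x)).

Definition reversible {V : Type} (q : V -> V -> R) : Prop :=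
  exists m : V -> R, (forall x, 0 < m x) /\ (forall x y, q x y * m x = q y x * m y).

Inductive walk {V : Type} (q : V -> V -> R) : nat -> V -> V -> Prop :=
| walk0 : forall x, walk q 0 x x
| walkS : forall n x y z, 0 < q x y -> walk q n y z -> walk q (S n) x z.

Definition connected {V : Type} (q : V -> V -> R) : Prop :=
  forall x y, exists n, walk q n x y.

Definition gdist {V : Type} (q : V -> V -> R) (x y : V) : nat :=
  epsilon (inhabits 0%nat)
    (fun n => walk q n x y /\ forall m, walk q m x y -> (n <= m)%nat).

Definition is_qmin {V : Type} (q : V -> V -> R) (m : R) : Prop :=
  (forall x y, 0 < q x y -> m <= q x y) /\
  (forall b, (forall x y, 0 < q x y -> b <= q x y) -> b <= m).

Definition grad {V : Type} (q : V -> V -> R) (f : V -> R) (x y : V) : R :=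
  (f x - f y) / INR (gdist q x y).

Definition grad_norm_eq {V : Type} (q : V -> V -> R) (f : V -> R) (c : R) : Prop :=
  is_lub (fun r => exists a b : V, a <> b /\ r = Rabs (grad q f a b)) c.

Definition kappa_ge {V : Type} (q : V -> V -> R) (x y : V) (c : R) : Prop :=
  forall f : V -> R, grad_norm_eq q f 1 -> grad q f y x = 1 ->
    c <= grad q (lap q f) x y.

Definition nonneg_ollivier {V : Type} (q : V -> V -> R) : Prop :=
  forall x y, x <> y -> kappa_ge q x y 0.

Definition is_coupling {V : Type} (q : V -> V -> R)
    (qt : V * V -> V * V -> R) : Prop :=
  is_graph qt /\
  forall f : V -> R,
    (forall x y, lap qt (fun p => f (fst p)) (x, y) = lap q f x) /\
    (forall x y, lap qt (fun p => f (snd p)) (x, y) = lap q f y).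

Definition is_plan {V : Type} (q : V -> V -> R) (x0 y0 : V)
    (rho : V * V -> R) : Prop :=
  (forall p, 0 <= rho p) /\
  (forall x, x <> x0 -> sum_fin (fun y => rho (x, y)) (q x0 x)) /\
  (forall y, y <> y0 -> sum_fin (fun x => rho (x, y)) (q y0 y)).

Definition cost {V : Type} (q : V -> V -> R) (x0 y0 : V) (rho : V * V -> R) : R :=
  fsum (fun p => rho p * (INR (gdist q x0 y0) - INR (gdist q (fst p) (snd p)))).

Definition mu {V : Type} (q : V -> V -> R) (x0 y0 : V) (rho : V * V -> R)
    (k : Z) : R :=
  fsum (fun p => if Z.eq_dec (Z.of_nat (gdist q (fst p) (snd p))
                              - Z.of_nat (gdist q x0 y0))%Z k
                 then rho p else 0).

Definition optimal_plan {V : Type} (q : V -> V -> R) (x0 y0 : V)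
    (rho : V * V -> R) : Prop :=
  is_plan q x0 y0 rho /\
  forall rho', is_plan q x0 y0 rho' -> cost q x0 y0 rho' <= cost q x0 y0 rho.

Definition perfect_coupling {V : Type} (q : V -> V -> R) (qmin : R)
    (qt : V * V -> V * V -> R) : Prop :=
  is_coupling q qt /\
  forall x0 y0 : V,
    optimal_plan q x0 y0 (qt (x0, y0)) /\
    (forall k : Z, (1 < Z.abs k)%Z -> mu q x0 y0 (qt (x0, y0)) k = 0) /\
    (x0 <> y0 -> 2 * qmin <= mu q x0 y0 (qt (x0, y0)) (-1)%Z).

Definition q0 (a : R) (x y : nat) : R :=
  if (Nat.ltb 0 x && (Nat.eqb x (S y) || Nat.eqb y (S x)))%bool then a else 0.

(* Laplacian on N_0: sum_j q0(k,j)(u j - u k); q0(k,j) = 0 for j > k+1 *)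
Definition lapN (a : R) (u : nat -> R) (k : nat) : R :=
  sum_f_R0 (fun j => q0 a k j * (u j - u k)) (S k).

(* u t = P^{B_N}_t f : Dirichlet heat semigroup on B_N = {0..N} *)
Definition dirichlet_sol (a : R) (N : nat) (f : nat -> R) (u : R -> nat -> R) : Prop :=
  (forall t k, (N < k)%nat -> u t k = 0) /\
  (forall k, (k <= N)%nat -> u 0 k = f k) /\
  (forall t k, (k <= N)%nat ->
     derivable_pt_lim (fun s => u s k) t (lapN a (u t) k)).

(* minimal heat semigroup: P_t f (n) = lim_N P^{B_N}_t f (n) *)
Definition heat_min (a : R) (f : nat -> R) (t : R) (n : nat) (v : R) : Prop :=
  (forall N, exists u, dirichlet_sol a N f u) /\
  (forall U : nat -> R -> nat -> R, (forall N, dirichlet_sol a N f (U N)) ->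
     Un_cv (fun N => U N t n) v).

Definition ind_pos (n : nat) : R := if Nat.ltb 0 n then 1 else 0.

(* phi_t(n) = P^{N_0}_t 1_{N_+} (n) with rate a = 2 q_min *)
Definition phi (a t : R) (n : nat) : R :=
  epsilon (inhabits 0) (heat_min a ind_pos t n).

(* Main.v *)
Require Import Defs.
From Stdlib Require Import Reals.
From Stdlib Require Import Reals Lra Lia List Permutation ZArith Classical ClassicalEpsilon FunctionalExtensionality.
From Coquelicot Require Coquelicot.
Open Scope R_scope.

Definition sumL {A : Type} (l : list A) (g : A -> R) : R :=
  fold_right (fun a s => g a + s) 0 l.

Lemma sumL_nil {A} (g : A -> R) : sumL nil g = 0.
Proof. reflexivity. Qed.
Lemma sumL_cons {A} (a : A) l g : sumL (a :: l) g = g a + sumL l g.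
Proof. reflexivity. Qed.
Lemma sumL_app {A} (l1 l2 : list A) g : sumL (l1 ++ l2) g = sumL l1 g + sumL l2 g.
Proof. induction l1; simpl; [ring|]. unfold sumL in *; simpl. rewrite IHl1. ring. Qed.

Lemma sumL_ext {A} (l : list A) g h : (forall a, In a l -> g a = h a) -> sumL l g = sumL l h.
Proof. induction l; intros H; simpl; auto. unfold sumL in *; simpl. rewrite H by (left; auto).
  rewrite IHl; auto. intros; apply H; right; auto. Qed.

Lemma sumL_plus {A} (l : list A) g h : sumL l (fun a => g a + h a) = sumL l g + sumL l h.
Proof. induction l; unfold sumL in *; simpl; [ring|]. rewrite IHl; ring. Qed.
Lemma sumL_scal {A} (l : list A) c g : sumL l (fun a => c * g a) = c * sumL l g.
Proof. induction l; unfold sumL in *; simpl; [ring|]. rewrite IHl; ring. Qed.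
Lemma sumL_opp {A} (l : list A) g : sumL l (fun a => - g a) = - sumL l g.
Proof. induction l; unfold sumL in *; simpl; [ring|]. rewrite IHl; ring. Qed.
Lemma sumL_zero {A} (l : list A) : sumL l (fun _ => 0) = 0.
Proof. induction l; unfold sumL in *; simpl; [ring|]. rewrite IHl; ring. Qed.
Lemma sumL_le {A} (l : list A) g h : (forall a, In a l -> g a <= h a) -> sumL l g <= sumL l h.
Proof. induction l; intros H; unfold sumL in *; simpl; [lra|].
  assert (g a <= h a) by (apply H; left; auto).
  assert (fold_right (fun a s => g a + s) 0 l <= fold_right (fun a s => h a + s) 0 l)
    by (apply IHl; intros; apply H; right; auto). lra. Qed.
Lemma sumL_nonneg {A} (l : list A) g : (forall a, In a l -> 0 <= g a) -> 0 <= sumL l g.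
Proof. intros H. rewrite <- (sumL_zero l). apply sumL_le; auto. Qed.

Lemma sumL_perm {A} (l1 l2 : list A) g : Permutation l1 l2 -> sumL l1 g = sumL l2 g.
Proof. induction 1; unfold sumL in *; simpl; try lra. Qed.

Lemma sumL_nonneg_zero {A} (l : list A) g : (forall a, In a l -> 0 <= g a) ->
  sumL l g = 0 -> forall a, In a l -> g a = 0.
Proof. induction l; intros H S b Hb; [destruct Hb|]. rewrite sumL_cons in S.
  assert (0 <= g a) by (apply H; left; auto).
  assert (0 <= sumL l g) by (apply sumL_nonneg; intros; apply H; right; auto).
  destruct Hb as [<-|Hb]; [lra|]. apply IHl; auto; [intros; apply H; right; auto | lra]. Qed.

Definition eqdec {A : Type} (x y : A) : {x = y} + {x <> y} :=
  excluded_middle_informative (x = y).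

Definition nzb {A} (g : A -> R) (a : A) : bool :=
  if Req_EM_T (g a) 0 then false else true.

Lemma sumL_filter {A} (l : list A) g : sumL l g = sumL (filter (nzb g) l) g.
Proof. induction l; cbn [filter]; auto. unfold nzb at 1. destruct (Req_EM_T (g a) 0).
  - rewrite sumL_cons, e, IHl; ring.
  - rewrite !sumL_cons, IHl; auto. Qed.

Lemma sum_fin_unique {A} (g : A -> R) c1 c2 : sum_fin g c1 -> sum_fin g c2 -> c1 = c2.
Proof.
  intros [l1 [N1 [C1 E1]]] [l2 [N2 [C2 E2]]].
  change (c1 = sumL l1 g) in E1. change (c2 = sumL l2 g) in E2. subst.
  rewrite (sumL_filter l1), (sumL_filter l2). apply sumL_perm.
  apply NoDup_Permutation; try (apply NoDup_filter; auto).
  intros x; rewrite !filter_In; unfold nzb; destruct (Req_EM_T (g x) 0); split;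
  intros [H1 H2]; try discriminate; split; auto.
Qed.

Lemma sum_fin_list {A} (g : A -> R) l : NoDup l -> (forall a, g a <> 0 -> In a l) ->
  sum_fin g (sumL l g).
Proof. intros N C. exists l; repeat split; auto. Qed.

Lemma fsum_spec {A} (g : A -> R) c : sum_fin g c -> fsum g = c.
Proof. intros H. unfold fsum. apply (sum_fin_unique g).
  - apply epsilon_spec. exists c; auto.
  - auto. Qed.

Lemma fsum_list {A} (g : A -> R) l : NoDup l -> (forall a, g a <> 0 -> In a l) ->
  fsum g = sumL l g.
Proof. intros; apply fsum_spec, sum_fin_list; auto. Qed.

Lemma sumL_ind {A} (l : list A) (x : A) (F : A -> R) : NoDup l -> In x l ->
  sumL l (fun a => if eqdec a x then F a else 0) = F x.
Proof. induction l; intros N H; [destruct H|]. inversion N; subst. rewrite sumL_cons.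
  destruct (eqdec a x).
  - subst. rewrite (sumL_ext l _ (fun _ => 0)). rewrite sumL_zero; ring.
    intros b Hb. destruct (eqdec b x); auto. subst; contradiction.
  - destruct H as [H|H]; [contradiction|]. rewrite IHl; auto; ring. Qed.

Lemma sumL_ind_out {A} (l : list A) (x : A) (F : A -> R) : ~ In x l ->
  sumL l (fun a => if eqdec a x then F a else 0) = 0.
Proof. intros H. rewrite (sumL_ext l _ (fun _ => 0)). apply sumL_zero.
  intros b Hb. destruct (eqdec b x); auto. subst; contradiction. Qed.

Lemma sumL_prod {A B} (X : list A) (Y : list B) (h : A * B -> R) :
  sumL (list_prod X Y) h = sumL X (fun x => sumL Y (fun y => h (x, y))).
Proof. induction X; cbn [list_prod]; auto. rewrite sumL_app, sumL_cons, IHX. f_equal.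
  clear. induction Y; cbn [map]; auto. rewrite !sumL_cons, IHY; auto. Qed.

Definition nodupc {A} (l : list A) : list A := nodup eqdec l.

Section FM.
Variable I : Type.
Definition cstr := ((I -> R) * R)%type.

Inductive cone (L : list cstr) : (I -> R) -> R -> Prop :=
| cone0 : cone L (fun _ => 0) 0
| coneS : forall a b c ab bb, cone L a b -> In (ab, bb) L -> 0 <= c ->
    cone L (fun i => a i + c * ab i) (b + c * bb).

Lemma cone_single L a b : In (a, b) L -> cone L a b.
Proof. intros H. assert (E: cone L (fun i => 0 + 1 * a i) (0 + 1 * b)) by (apply coneS; auto; try constructor; lra).
  replace a with (fun i => 0 + 1 * a i); [replace b with (0 + 1 * b) by ring; auto|].
  apply functional_extensionality; intros; ring. Qed.

Lemma cone_add L a b a' b' : cone L a b -> cone L a' b' -> cone L (fun i => a i + a' i) (b + b').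
Proof. intros H1 H2. induction H2.
  - replace (fun i => a i + 0) with a by (apply functional_extensionality; intros; ring).
    replace (b + 0) with b by ring; auto.
  - replace (fun i => a i + (a0 i + c * ab i)) with (fun i => (a i + a0 i) + c * ab i)
      by (apply functional_extensionality; intros; ring).
    replace (b + (b0 + c * bb)) with ((b + b0) + c * bb) by ring. apply coneS; auto. Qed.

Lemma cone_scal L a b c : 0 <= c -> cone L a b -> cone L (fun i => c * a i) (c * b).
Proof. intros Hc H. induction H.
  - replace (fun _ : I => c * 0) with (fun _ : I => 0) by (apply functional_extensionality; intros; ring).
    replace (c * 0) with 0 by ring; constructor.
  - replace (fun i => c * (a i + c0 * ab i)) with (fun i => c * a i + (c * c0) * ab i)
      by (apply functional_extensionality; intros; ring).
    replace (c * (b + c0 * bb)) with (c * b + (c * c0) * bb) by ring. apply coneS; auto.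
    apply Rmult_le_pos; auto. Qed.

Lemma cone_mono L L' a b : (forall ab bb, In (ab, bb) L' -> cone L ab bb) -> cone L' a b -> cone L a b.
Proof. intros H C. induction C. constructor. apply cone_add; auto. apply cone_scal; auto. Qed.

Lemma cone_ind_prop L (P : (I -> R) -> R -> Prop) :
  P (fun _ => 0) 0 ->
  (forall a b c ab bb, P a b -> In (ab, bb) L -> 0 <= c -> P (fun i => a i + c * ab i) (b + c * bb)) ->
  forall a b, cone L a b -> P a b.
Proof. intros H0 HS a b C; induction C; eauto. Qed.

Definition dot (vars : list I) (a x : I -> R) := sumL vars (fun i => a i * x i).

Definition feasible (vars : list I) (L : list cstr) :=
  exists x, forall ab bb, In (ab, bb) L -> dot vars ab x <= bb.

Definition certificate (vars : list I) (L : list cstr) :=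
  exists a b, cone L a b /\ (forall i, In i vars -> a i = 0) /\ b < 0.

Lemma sep_exists (Lo Up : list R) : (forall l u, In l Lo -> In u Up -> l <= u) ->
  exists t, (forall l, In l Lo -> l <= t) /\ (forall u, In u Up -> t <= u).
Proof. induction Lo; intros H.
  - clear H. induction Up. exists 0; split; intros; simpl in *; tauto.
    destruct IHUp as [t [_ Ht]]. exists (Rmin a t); split; [intros l []|].
    intros u [<-|Hu]. apply Rmin_l. eapply Rle_trans; [apply Rmin_r| auto].
  - destruct IHLo as [t [H1 H2]]. intros; apply H; auto; right; auto.
    exists (Rmax a t); split. intros l [<-|Hl]. apply Rmax_l. eapply Rle_trans; [apply H1; auto|apply Rmax_r].
    intros u Hu. apply Rmax_lub; auto. apply H; auto; left; auto. Qed.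

Definition zb (v : I) (c : cstr) : bool := if Req_EM_T (fst c v) 0 then true else false.
Definition pb (v : I) (c : cstr) : bool := if Rlt_dec 0 (fst c v) then true else false.
Definition nb (v : I) (c : cstr) : bool := if Rlt_dec (fst c v) 0 then true else false.
Definition comb (v : I) (p n : cstr) : cstr :=
  (fun i => (- fst n v) * fst p i + fst p v * fst n i, (- fst n v) * snd p + fst p v * snd n).
Definition elim (v : I) (L : list cstr) : list cstr :=
  filter (zb v) L ++ flat_map (fun p => map (comb v p) (filter (nb v) L)) (filter (pb v) L).

Lemma elim_in v L ab bb : In (ab, bb) (elim v L) ->
  (In (ab, bb) L /\ ab v = 0) \/
  exists p n, In p L /\ In n L /\ 0 < fst p v /\ fst n v < 0 /\ (ab, bb) = comb v p n.
Proof. unfold elim; intros H. apply in_app_or in H. destruct H as [H|H].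
  - left. apply filter_In in H. destruct H as [H1 H2]. unfold zb in H2; simpl in H2.
    destruct (Req_EM_T (ab v) 0); [auto|discriminate].
  - right. apply in_flat_map in H. destruct H as [p [Hp H]]. apply in_map_iff in H.
    destruct H as [n [E Hn]]. apply filter_In in Hp, Hn. destruct Hp as [Hp Hp2]; destruct Hn as [Hn Hn2].
    unfold pb, nb in *. destruct (Rlt_dec 0 (fst p v)); [|discriminate].
    destruct (Rlt_dec (fst n v) 0); [|discriminate]. exists p, n; auto. Qed.

Lemma dot_lin vars a b c1 c2 x : dot vars (fun i => c1 * a i + c2 * b i) x = c1 * dot vars a x + c2 * dot vars b x.
Proof. unfold dot. rewrite <- !sumL_scal, <- sumL_plus. apply sumL_ext; intros; ring. Qed.

Variable eqI : forall x y : I, {x = y} + {x <> y}.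

Lemma dot_upd vars v t x a : ~ In v vars ->
  dot vars a (fun i => if eqI i v then t else x i) = dot vars a x.
Proof. intros H. unfold dot. apply sumL_ext. intros i Hi. destruct (eqI i v); auto. subst; contradiction. Qed.

Theorem farkas : forall vars, NoDup vars -> forall L, feasible vars L \/ certificate vars L.
Proof.
  induction vars as [|v vs IH]; intros ND L.
  - destruct (classic (forall ab bb, In (ab, bb) L -> 0 <= bb)) as [H|H].
    + left. exists (fun _ => 0). intros ab bb Hin. unfold dot; simpl. apply H in Hin. auto.
    + right. apply not_all_ex_not in H. destruct H as [ab H]. apply not_all_ex_not in H. destruct H as [bb H].
      apply imply_to_and in H. destruct H as [Hin H]. exists ab, bb. split; [apply cone_single; auto|].
      split; [intros i []|lra].
  - inversion ND; subst. destruct (IH H2 (elim v L)) as [[x' Hx']|[a [b [C [Ha Hb]]]]].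
    + left.
      set (up := fun p : cstr => (snd p - dot vs (fst p) x') / fst p v).
      destruct (sep_exists (map up (filter (nb v) L)) (map up (filter (pb v) L))) as [t [Ht1 Ht2]].
      { intros l u Hl Hu. apply in_map_iff in Hl, Hu. destruct Hl as [n [<- Hn]]. destruct Hu as [p [<- Hp]].
        pose proof Hn as Hn'. pose proof Hp as Hp'.
        apply filter_In in Hn', Hp'. destruct Hn' as [Hn1 Hn2]; destruct Hp' as [Hp1 Hp2]. unfold pb, nb in *.
        destruct (Rlt_dec 0 (fst p v)) as [pv|]; [|discriminate].
        destruct (Rlt_dec (fst n v) 0) as [nv|]; [|discriminate].
        assert (Hc : In (comb v p n) (elim v L)).
        { unfold elim. apply in_or_app; right. apply in_flat_map. exists p; split; auto.
          apply in_map_iff. exists n; auto. }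
        destruct (comb v p n) as [cab cbb] eqn:Ec. apply Hx' in Hc. unfold comb in Ec. injection Ec as E1 E2.
        rewrite <- E1 in Hc. rewrite dot_lin in Hc. rewrite <- E2 in Hc. unfold up.
        set (dp := dot vs (fst p) x') in *. set (dn := dot vs (fst n) x') in *.
        destruct p as [pa pb0]; destruct n as [na nb0]; simpl in *.
        apply Rmult_le_reg_r with (r := pa v * (- na v)). nra.
        replace ((nb0 - dn) / na v * (pa v * - na v)) with (- (nb0 - dn) * pa v) by (field; lra).
        replace ((pb0 - dp) / pa v * (pa v * - na v)) with ((pb0 - dp) * (- na v)) by (field; lra).
        nra. }
      exists (fun i => if eqI i v then t else x' i). intros ab bb Hin.
      unfold dot. rewrite sumL_cons. destruct (eqI v v) as [_|]; [|congruence].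
      fold (dot vs ab (fun i => if eqI i v then t else x' i)). rewrite dot_upd by auto.
      destruct (Rtotal_order (ab v) 0) as [Hn|[Hz|Hp]].
      * assert (Hi : In (ab, bb) (filter (nb v) L)) by (apply filter_In; split; auto; unfold nb; simpl;
          destruct (Rlt_dec (ab v) 0); auto; lra).
        specialize (Ht1 (up (ab, bb)) (in_map _ _ _ Hi)). unfold up in Ht1; simpl in Ht1.
        apply Rmult_le_reg_r with (r := - ab v). lra.
        assert (E : (bb - dot vs ab x') / ab v * (- ab v) = - (bb - dot vs ab x')) by (field; lra). nra.
      * rewrite Hz. assert (Hi : In (ab, bb) (elim v L)).
        { unfold elim. apply in_or_app; left. apply filter_In; split; auto. unfold zb; simpl.
          destruct (Req_EM_T (ab v) 0); auto. }
        apply Hx' in Hi. lra.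
      * assert (Hi : In (ab, bb) (filter (pb v) L)) by (apply filter_In; split; auto; unfold pb; simpl;
          destruct (Rlt_dec 0 (ab v)); auto; lra).
        specialize (Ht2 (up (ab, bb)) (in_map _ _ _ Hi)). unfold up in Ht2; simpl in Ht2.
        assert (E : (bb - dot vs ab x') / ab v * ab v = bb - dot vs ab x') by (field; lra). nra.
    + right. exists a, b. split; [|split; auto].
      * apply (cone_mono _ (elim v L)); auto. intros ab bb Hin. apply elim_in in Hin.
        destruct Hin as [[Hin _]|[p [n [Hp [Hn [Hpv [Hnv E]]]]]]]. apply cone_single; auto.
        unfold comb in E. destruct p as [pa pb0]; destruct n as [na nb0]; simpl in *.
        injection E as E1 E2. subst ab bb.
        apply (cone_add L (fun i => - na v * pa i) (- na v * pb0) (fun i => pa v * na i) (pa v * nb0)).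
        apply cone_scal; [lra| apply cone_single; auto]. apply cone_scal; [lra| apply cone_single; auto].
      * intros i [<-|Hi]; auto.
        clear Ha Hb. revert a b C. apply cone_ind_prop. auto.
        intros a b c ab bb Ha Hin _. rewrite Ha. apply elim_in in Hin.
        destruct Hin as [[_ Z]|[p [n [_ [_ [_ [_ E]]]]]]]. rewrite Z; ring.
        unfold comb in E; injection E as E1 E2; subst; ring.
Qed.
End FM.

Lemma least_exists (P : nat -> Prop) : (exists n, P n) -> exists n, P n /\ forall m, P m -> (n <= m)%nat.
Proof.
  intros [n Hn]. revert Hn. induction n as [n IH] using (well_founded_induction Wf_nat.lt_wf). intros Hn.
  destruct (classic (exists m, (m < n)%nat /\ P m)) as [[m [Hm Pm]]|H].
  - apply (IH m Hm Pm).
  - exists n; split; auto. intros m Pm. destruct (Nat.lt_ge_cases m n); auto. exfalso; apply H; eauto.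
Qed.

Section G.
Variable V : Type.
Variable q : V -> V -> R.
Hypothesis Hg : is_graph q.
Hypothesis Hr : reversible q.
Hypothesis Hc : connected q.

Lemma gdist_spec x y : walk q (gdist q x y) x y /\ forall m, walk q m x y -> (gdist q x y <= m)%nat.
Proof. unfold gdist. apply epsilon_spec. apply least_exists. apply Hc. Qed.

Lemma walk_app n m x y z : walk q n x y -> walk q m y z -> walk q (n + m) x z.
Proof. induction 1; intros Hw; simpl; auto. econstructor; eauto. Qed.

Lemma walk_snoc n x y z : walk q n x y -> 0 < q y z -> walk q (S n) x z.
Proof. intros H Hq. replace (S n) with (n + 1)%nat by lia. apply walk_app with y; auto.
  econstructor; eauto. constructor. Qed.

Lemma q_sym x y : 0 < q x y -> 0 < q y x.
Proof. intros H. destruct Hr as [m [Hm E]]. specialize (E x y). pose proof (Hm x) as Hx. pose proof (Hm y) as Hy.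
  destruct Hg as [Hp _]. specialize (Hp y x).
  destruct (Rle_lt_or_eq_dec _ _ Hp) as [|E2]; auto. rewrite <- E2 in E.
  assert (q x y * m x > 0) by (apply Rmult_lt_0_compat; auto). nra. Qed.

Lemma walk_rev n x y : walk q n x y -> walk q n y x.
Proof. induction 1. constructor. apply walk_snoc with y; auto. apply q_sym; auto. Qed.

Lemma gdist_sym x y : gdist q x y = gdist q y x.
Proof. apply Nat.le_antisymm.
  - apply (proj2 (gdist_spec x y)). apply walk_rev, gdist_spec.
  - apply (proj2 (gdist_spec y x)). apply walk_rev, gdist_spec. Qed.

Lemma gdist_tri x y z : (gdist q x z <= gdist q x y + gdist q y z)%nat.
Proof. apply (proj2 (gdist_spec x z)). apply walk_app with y; apply gdist_spec. Qed.

Lemma gdist_refl x : gdist q x x = 0%nat.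
Proof. pose proof (proj2 (gdist_spec x x) 0%nat (walk0 q x)). lia. Qed.

Lemma gdist_pos x y : x <> y -> (1 <= gdist q x y)%nat.
Proof. intros H. destruct (gdist q x y) eqn:E; [|lia]. exfalso. pose proof (proj1 (gdist_spec x y)) as W.
  rewrite E in W. inversion W; subst; auto. Qed.

Lemma gdist_tri_R x y z : INR (gdist q x z) <= INR (gdist q x y) + INR (gdist q y z).
Proof. rewrite <- plus_INR. apply le_INR, gdist_tri. Qed.

End G.

Lemma NoDup_prod {A B} (X : list A) (Y : list B) : NoDup X -> NoDup Y -> NoDup (list_prod X Y).
Proof. intros NX NY. induction NX; simpl. constructor.
  apply NoDup_app; auto.
  - apply NoDup_map_NoDup_ForallPairs; auto. intros u v _ _ E; injection E; auto.
  - intros p Hp1 Hp2. apply in_map_iff in Hp1. destruct Hp1 as [y [<- _]].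
    apply in_prod_iff in Hp2. tauto. Qed.

Lemma nbr_list {A} (x0 : A) (l : list A) : exists X', NoDup (x0 :: X') /\
  (forall y, In y l -> y = x0 \/ In y X') /\ (forall y, In y X' -> In y l).
Proof. exists (filter (fun y => if eqdec y x0 then false else true) (nodup eqdec l)). split; [|split].
  - constructor. intros H. apply filter_In in H. destruct H as [_ H]. destruct (eqdec x0 x0); congruence.
    apply NoDup_filter, NoDup_nodup.
  - intros y Hy. destruct (eqdec y x0); auto. right. apply filter_In. split. apply nodup_In; auto.
    destruct (eqdec y x0); congruence.
  - intros y Hy. apply filter_In in Hy. apply (nodup_In eqdec). tauto. Qed.

Lemma nodup_list {A} (l : list A) : exists l', NoDup l' /\ forall y, In y l <-> In y l'.
Proof. exists (nodup eqdec l). split. apply NoDup_nodup. intros; rewrite nodup_In; tauto. Qed.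

Definition minL {A} (g : A -> R) (x0 : A) (l : list A) : R :=
  fold_right (fun x m => Rmin (g x) m) (g x0) l.

Lemma minL_le {A} g (x0 : A) l x : In x (x0 :: l) -> minL g x0 l <= g x.
Proof. induction l as [|b l IH]; intros H; unfold minL in *; simpl in *.
  - destruct H as [<-|[]]. apply Rle_refl.
  - destruct H as [<-|[<-|H]].
    + eapply Rle_trans; [apply Rmin_r|]. apply IH; left; auto.
    + apply Rmin_l.
    + eapply Rle_trans; [apply Rmin_r|]. apply IH; right; auto. Qed.

Lemma minL_att {A} g (x0 : A) l : exists x, In x (x0 :: l) /\ minL g x0 l = g x.
Proof. induction l as [|b l IH]; unfold minL in *; simpl. exists x0; auto. destruct IH as [x [Hx E]].
  unfold Rmin at 1. destruct (Rle_dec (g b) (fold_right (fun x m => Rmin (g x) m) (g x0) l)).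
  exists b; simpl; auto. exists x. split; auto. simpl in Hx |- *. tauto. Qed.

Lemma minL_ge {A} g (x0 : A) l c : (forall x, In x (x0 :: l) -> c <= g x) -> c <= minL g x0 l.
Proof. intros H. destruct (minL_att g x0 l) as [x [Hx ->]]. auto. Qed.

Section Transport.
Variable V : Type.
Variable q : V -> V -> R.
Hypothesis Hg : is_graph q.
Hypothesis Hr : reversible q.
Hypothesis Hc : connected q.
Hypothesis Hk : nonneg_ollivier q.
Variables x0 y0 : V.
Hypothesis Hne : x0 <> y0.
Variables X' Y' : list V.
Hypothesis NX : NoDup (x0 :: X').
Hypothesis NY : NoDup (y0 :: Y').
Hypothesis CX : forall y, 0 < q x0 y -> y = x0 \/ In y X'.
Hypothesis CY : forall y, 0 < q y0 y -> y = y0 \/ In y Y'.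

Notation d := (gdist q).
Definition Xl := x0 :: X'.
Definition Yl := y0 :: Y'.
Definition Pl := list_prod Xl Yl.
Definition wt (p : V * V) : R := INR (d x0 y0) - INR (d (fst p) (snd p)).

Definition cN (p : V * V) : cstr (V * V) := ((fun i => if eqdec i p then -1 else 0), 0).
Definition cRu (x : V) : cstr (V * V) := ((fun i => if eqdec (fst i) x then 1 else 0), q x0 x).
Definition cRl (x : V) : cstr (V * V) := ((fun i => if eqdec (fst i) x then -1 else 0), - q x0 x).
Definition cCu (y : V) : cstr (V * V) := ((fun i => if eqdec (snd i) y then 1 else 0), q y0 y).
Definition cCl (y : V) : cstr (V * V) := ((fun i => if eqdec (snd i) y then -1 else 0), - q y0 y).
Definition cW : cstr (V * V) := ((fun i => - wt i), 0).
Definition LL : list (cstr (V * V)) :=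
  map cN Pl ++ map cRu X' ++ map cRl X' ++ map cCu Y' ++ map cCl Y' ++ (cW :: nil).

Lemma NP : NoDup Pl. Proof. apply NoDup_prod; auto. Qed.
Lemma NX' : NoDup X'. Proof. inversion NX; auto. Qed.
Lemma NY' : NoDup Y'. Proof. inversion NY; auto. Qed.
Lemma x0X' : ~ In x0 X'. Proof. inversion NX; auto. Qed.
Lemma y0Y' : ~ In y0 Y'. Proof. inversion NY; auto. Qed.

Lemma qpos x y : 0 <= q x y. Proof. apply Hg. Qed.

Lemma dot_row (z : V * V -> R) x : In x Xl ->
  dot (V * V) Pl (fun i => if eqdec (fst i) x then 1 else 0) z = sumL Yl (fun y => z (x, y)).
Proof. intros Hx. unfold dot, Pl. rewrite sumL_prod. simpl fst.
  rewrite (sumL_ext Xl _ (fun x' => if eqdec x' x then sumL Yl (fun y => z (x', y)) else 0)).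
  apply (sumL_ind Xl x (fun x' => sumL Yl (fun y => z (x', y)))); auto.
  intros x' _. destruct (eqdec x' x). apply sumL_ext; intros; ring.
  rewrite (sumL_ext Yl _ (fun _ => 0)). apply sumL_zero. intros; ring. Qed.

Lemma dot_col (z : V * V -> R) y : In y Yl ->
  dot (V * V) Pl (fun i => if eqdec (snd i) y then 1 else 0) z = sumL Xl (fun x => z (x, y)).
Proof. intros Hy. unfold dot, Pl. rewrite sumL_prod. simpl snd.
  rewrite (sumL_ext Xl _ (fun x' => z (x', y))). auto.
  intros x' _. rewrite (sumL_ext Yl _ (fun y' => if eqdec y' y then z (x', y') else 0)).
  apply (sumL_ind Yl y (fun y' => z (x', y'))); auto. intros y' _. destruct (eqdec y' y); ring. Qed.

Lemma dot_neg (z : V * V -> R) (a : V * V -> R) :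
  dot (V * V) Pl (fun i => - a i) z = - dot (V * V) Pl a z.
Proof. unfold dot. rewrite <- sumL_opp. apply sumL_ext; intros; ring. Qed.

Lemma feasible_plan : feasible (V * V) Pl LL -> exists rho, is_plan q x0 y0 rho /\ 0 <= cost q x0 y0 rho.
Proof.
  intros [z Hz].
  set (rho := fun p => if excluded_middle_informative (In p Pl) then z p else 0).
  assert (Hin : forall c, In c LL -> dot (V * V) Pl (fst c) z <= snd c) by (intros [ab bb] H; apply Hz; auto).
  assert (Hnn : forall p, In p Pl -> 0 <= z p).
  { intros p Hp. assert (H : In (cN p) LL) by (unfold LL; apply in_or_app; left; apply in_map; auto).
    apply Hin in H. unfold cN in H; cbn [fst snd] in H. unfold dot in H.
    rewrite (sumL_ext Pl _ (fun i => if eqdec i p then - z i else 0)) in H.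
    rewrite sumL_ind in H; auto. lra. apply NP. intros i _; destruct (eqdec i p); ring. }
  assert (Hrow : forall x, In x X' -> sumL Yl (fun y => z (x, y)) = q x0 x).
  { intros x Hx. assert (H1 : In (cRu x) LL) by (unfold LL; apply in_or_app; right; apply in_or_app; left; apply in_map; auto).
    assert (H2 : In (cRl x) LL) by (unfold LL; do 2 (apply in_or_app; right); apply in_or_app; left; apply in_map; auto).
    apply Hin in H1, H2. unfold cRu, cRl in *; cbn [fst snd] in *.
    rewrite dot_row in H1 by (right; auto).
    replace (fun i : V * V => if eqdec (fst i) x then -1 else 0) with (fun i : V * V => - (if eqdec (fst i) x then 1 else 0)) in H2
      by (apply functional_extensionality; intros i; destruct (eqdec (fst i) x); ring).
    rewrite dot_neg, dot_row in H2 by (right; auto). lra. }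
  assert (Hcol : forall y, In y Y' -> sumL Xl (fun x => z (x, y)) = q y0 y).
  { intros y Hy. assert (H1 : In (cCu y) LL) by (unfold LL; do 3 (apply in_or_app; right); apply in_or_app; left; apply in_map; auto).
    assert (H2 : In (cCl y) LL) by (unfold LL; do 4 (apply in_or_app; right); apply in_or_app; left; apply in_map; auto).
    apply Hin in H1, H2. unfold cCu, cCl in *; cbn [fst snd] in *.
    rewrite dot_col in H1 by (right; auto).
    replace (fun i : V * V => if eqdec (snd i) y then -1 else 0) with (fun i : V * V => - (if eqdec (snd i) y then 1 else 0)) in H2
      by (apply functional_extensionality; intros i; destruct (eqdec (snd i) y); ring).
    rewrite dot_neg, dot_col in H2 by (right; auto). lra. }
  assert (Hw : 0 <= dot (V * V) Pl wt z).
  { assert (H : In cW LL) by (unfold LL; do 5 (apply in_or_app; right); left; auto).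
    apply Hin in H. unfold cW in H; cbn [fst snd] in H. rewrite dot_neg in H. lra. }
  assert (Hrho : forall p, rho p <> 0 -> In p Pl).
  { intros p H. unfold rho in H. destruct (excluded_middle_informative (In p Pl)); auto. lra. }
  assert (HrhoP : forall p, In p Pl -> rho p = z p).
  { intros p H. unfold rho. destruct (excluded_middle_informative (In p Pl)); tauto. }
  exists rho. split; [split; [|split]|].
  - intros p. unfold rho. destruct (excluded_middle_informative (In p Pl)); [apply Hnn; auto| lra].
  - intros x Hx0. destruct (classic (In x X')) as [Hx|Hx].
    + rewrite <- (Hrow x Hx). replace (sumL Yl (fun y => z (x, y))) with (sumL Yl (fun y => rho (x, y))).
      apply sum_fin_list. apply NY. intros y Hy. apply Hrho in Hy. apply in_prod_iff in Hy; tauto.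
      apply sumL_ext; intros y Hy. apply HrhoP. apply in_prod_iff; split; auto; right; auto.
    + assert (E : q x0 x = 0). { destruct (Rle_lt_or_eq_dec _ _ (qpos x0 x)) as [H|H]; auto.
        destruct (CX x H); [congruence| contradiction]. }
      rewrite E. exists nil. split; [constructor|split; auto].
      intros y Hy. apply Hrho in Hy. apply in_prod_iff in Hy. destruct Hy as [[H|H] _]; congruence || contradiction.
  - intros y Hy0. destruct (classic (In y Y')) as [Hy|Hy].
    + rewrite <- (Hcol y Hy). replace (sumL Xl (fun x => z (x, y))) with (sumL Xl (fun x => rho (x, y))).
      apply sum_fin_list. apply NX. intros x Hx. apply Hrho in Hx. apply in_prod_iff in Hx; tauto.
      apply sumL_ext; intros x Hx. apply HrhoP. apply in_prod_iff; split; auto; right; auto.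
    + assert (E : q y0 y = 0). { destruct (Rle_lt_or_eq_dec _ _ (qpos y0 y)) as [H|H]; auto.
        destruct (CY y H); [congruence| contradiction]. }
      rewrite E. exists nil. split; [constructor|split; auto].
      intros x Hx. apply Hrho in Hx. apply in_prod_iff in Hx. destruct Hx as [_ [H|H]]; congruence || contradiction.
  - unfold cost. rewrite (fsum_list _ Pl NP).
    + unfold dot in Hw. rewrite (sumL_ext Pl _ (fun i => wt i * z i)). auto.
      intros p Hp. rewrite HrhoP by auto. unfold wt; ring.
    + intros p H. apply Hrho. intros E; apply H; rewrite E; ring.
Qed.
End Transport.

Section Cert.
Variable V : Type.
Variable q : V -> V -> R.
Hypothesis Hg : is_graph q.
Hypothesis Hr : reversible q.
Hypothesis Hc : connected q.
Hypothesis Hk : nonneg_ollivier q.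
Variables x0 y0 : V.
Hypothesis Hne : x0 <> y0.
Variables X' Y' : list V.
Hypothesis NX : NoDup (x0 :: X').
Hypothesis NY : NoDup (y0 :: Y').
Hypothesis CX : forall y, 0 < q x0 y -> y = x0 \/ In y X'.
Hypothesis CY : forall y, 0 < q y0 y -> y = y0 \/ In y Y'.

Notation d := (gdist q).
Notation Pl := (Pl V x0 y0 X' Y').
Notation wt := (wt V q x0 y0).
Notation LL := (LL V q x0 y0 X' Y').

Definition Pinv (a : V * V -> R) (b : R) : Prop :=
  exists (al be : V -> R) (lam : R), 0 <= lam /\ (forall v, ~ In v X' -> al v = 0) /\
    (forall v, ~ In v Y' -> be v = 0) /\
    (forall i, In i Pl -> a i <= al (fst i) + be (snd i) - lam * wt i) /\
    b = sumL X' (fun x => al x * q x0 x) + sumL Y' (fun y => be y * q y0 y).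

Lemma sumL_upd (l : list V) (al : V -> R) x c (F : V -> R) : NoDup l -> In x l ->
  sumL l (fun v => (al v + (if eqdec v x then c else 0)) * F v) = sumL l (fun v => al v * F v) + c * F x.
Proof. intros N H. rewrite <- (sumL_ind l x (fun v => c * F v)) by auto. rewrite <- sumL_plus.
  apply sumL_ext; intros v _; destruct (eqdec v x); ring. Qed.

Lemma Pinv_cone a b : cone (V * V) LL a b -> Pinv a b.
Proof.
  apply cone_ind_prop.
  - exists (fun _ => 0), (fun _ => 0), 0. split; [lra|split; [auto|split; [auto|split]]].
    intros; lra. rewrite (sumL_ext X' _ (fun _ => 0)), (sumL_ext Y' _ (fun _ => 0)) by (intros; ring).
    rewrite !sumL_zero; ring.
  - intros a0 b0 c ab bb [al [be [lam [Hl [Ha [Hb [Hi Eb]]]]]]] Hin Hc0.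
    unfold LL in Hin. repeat (apply in_app_or in Hin; destruct Hin as [Hin|Hin]).
    + apply in_map_iff in Hin. destruct Hin as [p [E _]]. unfold cN in E. injection E as E1 E2. subst ab bb.
      exists al, be, lam. split; auto; split; auto; split; auto; split.
      intros i Hi'. specialize (Hi i Hi'). destruct (eqdec i p); nra. rewrite Eb; ring.
    + apply in_map_iff in Hin. destruct Hin as [x [E Hx]]. unfold cRu in E. injection E as E1 E2. subst ab bb.
      exists (fun v => al v + (if eqdec v x then c else 0)), be, lam. split; auto; split; [|split; auto; split].
      * intros v Hv. rewrite Ha by auto. destruct (eqdec v x); [subst; contradiction| ring].
      * intros i Hi'. specialize (Hi i Hi'). cbn beta. destruct (eqdec (fst i) x); lra.
      * rewrite sumL_upd by (auto; apply (NX' V x0 X' NX)). rewrite Eb; ring.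
    + apply in_map_iff in Hin. destruct Hin as [x [E Hx]]. unfold cRl in E. injection E as E1 E2. subst ab bb.
      exists (fun v => al v + (if eqdec v x then - c else 0)), be, lam. split; auto; split; [|split; auto; split].
      * intros v Hv. rewrite Ha by auto. destruct (eqdec v x); [subst; contradiction| ring].
      * intros i Hi'. specialize (Hi i Hi'). cbn beta. destruct (eqdec (fst i) x); lra.
      * rewrite sumL_upd by (auto; apply (NX' V x0 X' NX)). rewrite Eb; ring.
    + apply in_map_iff in Hin. destruct Hin as [y [E Hy]]. unfold cCu in E. injection E as E1 E2. subst ab bb.
      exists al, (fun v => be v + (if eqdec v y then c else 0)), lam. split; auto; split; auto; split; [|split].
      * intros v Hv. rewrite Hb by auto. destruct (eqdec v y); [subst; contradiction| ring].
      * intros i Hi'. specialize (Hi i Hi'). cbn beta. destruct (eqdec (snd i) y); lra.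
      * rewrite sumL_upd by (auto; apply (NY' V y0 Y' NY)). rewrite Eb; ring.
    + apply in_map_iff in Hin. destruct Hin as [y [E Hy]]. unfold cCl in E. injection E as E1 E2. subst ab bb.
      exists al, (fun v => be v + (if eqdec v y then - c else 0)), lam. split; auto; split; auto; split; [|split].
      * intros v Hv. rewrite Hb by auto. destruct (eqdec v y); [subst; contradiction| ring].
      * intros i Hi'. specialize (Hi i Hi'). cbn beta. destruct (eqdec (snd i) y); lra.
      * rewrite sumL_upd by (auto; apply (NY' V y0 Y' NY)). rewrite Eb; ring.
    + destruct Hin as [E|[]]. unfold cW in E. injection E as E1 E2. subst ab bb.
      exists al, be, (lam + c). split; [lra|split; auto; split; auto; split].
      intros i Hi'. specialize (Hi i Hi'). lra. rewrite Eb; ring.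
Qed.
End Cert.

Section Cert2.
Variable V : Type.
Variable q : V -> V -> R.
Hypothesis Hg : is_graph q.
Hypothesis Hr : reversible q.
Hypothesis Hc : connected q.
Hypothesis Hk : nonneg_ollivier q.
Variables x0 y0 : V.
Hypothesis Hne : x0 <> y0.
Variables X' Y' : list V.
Hypothesis NX : NoDup (x0 :: X').
Hypothesis NY : NoDup (y0 :: Y').
Hypothesis CX : forall y, 0 < q x0 y -> y = x0 \/ In y X'.
Hypothesis CY : forall y, 0 < q y0 y -> y = y0 \/ In y Y'.

Notation d := (gdist q).
Notation Pl := (Pl V x0 y0 X' Y').
Notation wt := (wt V q x0 y0).
Notation LL := (LL V q x0 y0 X' Y').

Lemma dsym x y : d x y = d y x. Proof. apply (gdist_sym V q Hg Hr Hc). Qed.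
Lemma dtri x y z : INR (d x z) <= INR (d x y) + INR (d y z). Proof. apply (gdist_tri_R V q Hc). Qed.
Lemma drefl x : d x x = 0%nat. Proof. apply (gdist_refl V q Hc). Qed.
Lemma dpos x y : x <> y -> 1 <= INR (d x y).
Proof. intros H. replace 1 with (INR 1) by reflexivity. apply le_INR, (gdist_pos V q Hc); auto. Qed.

Lemma lap_list (f : V -> R) x (l : list V) : NoDup l -> (forall y, 0 < q x y -> In y l) ->
  lap q f x = sumL l (fun y => q x y * (f y - f x)).
Proof. intros N C. unfold lap. apply fsum_list; auto. intros y H. apply C.
  destruct (Rle_lt_or_eq_dec _ _ (proj1 Hg x y)); auto. exfalso; apply H; rewrite <- e; ring. Qed.

Lemma cert_false : certificate (V * V) Pl LL -> False.
Proof.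
  intros [a [b [C [Ha0 Hb]]]].
  destruct (Pinv_cone V q x0 y0 X' Y' NX NY a b C) as [al [be [lam [Hl [Hal [Hbe [Hi Eb]]]]]]].
  assert (Hi0 : forall i, In i Pl -> 0 <= al (fst i) + be (snd i) - lam * wt i)
    by (intros i Hin; rewrite <- (Ha0 i Hin); auto).
  assert (x0n : ~ In x0 X') by (inversion NX; auto).
  assert (y0n : ~ In y0 Y') by (inversion NY; auto).
  assert (qp : forall x y, 0 <= q x y) by apply Hg.
  assert (Hlam : 0 < lam).
  { destruct (Rle_lt_or_eq_dec _ _ Hl) as [|E]; auto. exfalso. subst lam.
    assert (A1 : forall x, In x X' -> 0 <= al x).
    { intros x Hx. pose proof (Hi0 (x, y0) ltac:(apply in_prod_iff; split; [right|left]; auto)) as H.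
      cbn [fst snd] in H. rewrite (Hbe y0 y0n) in H. lra. }
    assert (A2 : forall y, In y Y' -> 0 <= be y).
    { intros y Hy. pose proof (Hi0 (x0, y) ltac:(apply in_prod_iff; split; [left|right]; auto)) as H.
      cbn [fst snd] in H. rewrite (Hal x0 x0n) in H. lra. }
    assert (0 <= sumL X' (fun x => al x * q x0 x)) by (apply sumL_nonneg; intros; apply Rmult_le_pos; auto).
    assert (0 <= sumL Y' (fun y => be y * q y0 y)) by (apply sumL_nonneg; intros; apply Rmult_le_pos; auto).
    lra. }
  set (al' := fun v => al v / lam). set (be' := fun v => be v / lam).
  assert (Hw : forall x y, In x (x0 :: X') -> In y (y0 :: Y') -> INR (d x0 y0) - INR (d x y) <= al' x + be' y).
  { intros x y Hx Hy. pose proof (Hi0 (x, y) ltac:(apply in_prod_iff; auto)) as H. cbn [fst snd] in H.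
    unfold wt in H; cbn [fst snd] in H. unfold al', be'.
    apply Rmult_le_reg_r with lam; auto. replace ((al x / lam + be y / lam) * lam) with (al x + be y) by (field; lra). lra. }
  set (f := fun z => minL (fun x => al' x + INR (d x z)) x0 X').
  assert (Hlip : forall u v, f u <= f v + INR (d u v)).
  { intros u v. unfold f. destruct (minL_att (fun x => al' x + INR (d x v)) x0 X') as [x [Hx E]].
    rewrite E. eapply Rle_trans. apply (minL_le (fun x => al' x + INR (d x u)) x0 X' x Hx).
    pose proof (dtri x v u). rewrite (dsym v u) in H. lra. }
  assert (al'0 : al' x0 = 0) by (unfold al'; rewrite Hal; auto; unfold Rdiv; ring).
  assert (be'0 : be' y0 = 0) by (unfold be'; rewrite Hbe; auto; unfold Rdiv; ring).
  assert (fX : forall x, In x (x0 :: X') -> f x <= al' x).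
  { intros x Hx. unfold f. eapply Rle_trans. apply (minL_le (fun x' => al' x' + INR (d x' x)) x0 X' x Hx).
    rewrite drefl; simpl; lra. }
  assert (fY : forall y, In y (y0 :: Y') -> INR (d x0 y0) - be' y <= f y).
  { intros y Hy. unfold f. apply minL_ge. intros x Hx. pose proof (Hw x y Hx Hy). lra. }
  assert (fx0 : f x0 = 0).
  { pose proof (fX x0 (or_introl eq_refl)). pose proof (fY y0 (or_introl eq_refl)).
    pose proof (Hlip y0 x0). rewrite (dsym y0 x0) in H1. lra. }
  assert (fy0 : f y0 = INR (d x0 y0)).
  { pose proof (fY y0 (or_introl eq_refl)). pose proof (Hlip y0 x0). rewrite (dsym y0 x0) in H0. lra. }
  assert (D0 : 1 <= INR (d x0 y0)) by (apply dpos; auto).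
  assert (L1 : lap q f x0 <= sumL (x0 :: X') (fun x => q x0 x * al' x)).
  { rewrite (lap_list f x0 (x0 :: X')); auto. apply sumL_le. intros x Hx. rewrite fx0.
    pose proof (fX x Hx). pose proof (qp x0 x). nra.
    intros y Hy; destruct (CX y Hy); [left; auto| right; auto]. }
  assert (L2 : sumL (y0 :: Y') (fun y => q y0 y * (- be' y)) <= lap q f y0).
  { rewrite (lap_list f y0 (y0 :: Y')); auto. apply sumL_le. intros y Hy. rewrite fy0.
    pose proof (fY y Hy). pose proof (qp y0 y). nra.
    intros y Hy; destruct (CY y Hy); [left; auto| right; auto]. }
  assert (S1 : sumL (x0 :: X') (fun x => q x0 x * al' x) = sumL X' (fun x => al x * q x0 x) / lam).
  { rewrite sumL_cons, al'0, Rmult_0_r, Rplus_0_l. unfold Rdiv. rewrite (Rmult_comm _ (/ lam)), <- sumL_scal.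
    apply sumL_ext; intros; unfold al', Rdiv; ring. }
  assert (S2 : sumL (y0 :: Y') (fun y => q y0 y * (- be' y)) = - (sumL Y' (fun y => be y * q y0 y) / lam)).
  { rewrite sumL_cons, be'0, Ropp_0, Rmult_0_r, Rplus_0_l. unfold Rdiv.
    rewrite (Rmult_comm _ (/ lam)), <- sumL_scal, <- sumL_opp. apply sumL_ext; intros; unfold be', Rdiv; ring. }
  assert (Neg : lap q f x0 - lap q f y0 < 0).
  { assert (b / lam < 0) by (apply Rdiv_neg_pos; auto).
    rewrite Eb in H. unfold Rdiv in H. rewrite Rmult_plus_distr_r in H. unfold Rdiv in S1, S2. lra. }
  assert (Hn : grad_norm_eq q f 1).
  { split.
    - intros r [u [v [Huv ->]]]. unfold grad. pose proof (dpos u v Huv).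
      unfold Rdiv. rewrite Rabs_mult, Rabs_inv, (Rabs_pos_eq (INR (d u v))) by lra.
      apply Rmult_le_reg_r with (INR (d u v)); [lra|]. rewrite Rmult_assoc, Rinv_l, Rmult_1_r by lra.
      pose proof (Hlip u v). pose proof (Hlip v u). rewrite (dsym v u) in H1.
      apply Rabs_le in H0 || idtac. unfold Rabs; destruct (Rcase_abs (f u - f v)); lra.
    - intros bnd Hub. apply Hub. exists y0, x0. split; auto.
      unfold grad. rewrite fx0, fy0, (dsym y0 x0). replace ((INR (d x0 y0) - 0) / INR (d x0 y0)) with 1 by (field; lra).
      rewrite Rabs_R1; auto. }
  assert (Hgr : grad q f y0 x0 = 1).
  { unfold grad. rewrite fx0, fy0, (dsym y0 x0). field; lra. }
  pose proof (Hk x0 y0 Hne f Hn Hgr) as K. unfold grad in K.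
  assert (0 < / INR (d x0 y0)) by (apply Rinv_0_lt_compat; lra).
  unfold Rdiv in K. nra.
Qed.

Lemma plan_exists : exists rho, is_plan q x0 y0 rho /\ 0 <= cost q x0 y0 rho.
Proof. destruct (farkas (V * V) eqdec Pl (NP V x0 y0 X' Y' NX NY) LL) as [F|C].
  - apply (feasible_plan V q Hg x0 y0 X' Y' NX NY CX CY F).
  - exfalso; apply cert_false; auto. Qed.
End Cert2.

Module HeatPS.
Import Coquelicot.Coquelicot.

Lemma dpl_cont g s l : derivable_pt_lim g s l -> continuity_pt g s.
Proof. intros H. apply derivable_continuous_pt. exists l; auto. Qed.

Lemma mvt_eq (g g' : R -> R) x y :
  (forall s, Rmin x y <= s <= Rmax x y -> derivable_pt_lim g s (g' s)) ->
  exists c, Rmin x y <= c <= Rmax x y /\ g y - g x = g' c * (y - x).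
Proof. intros H. apply MVT_gen.
  - intros s Hs. apply is_derive_Reals. apply H; lra.
  - intros s Hs. apply dpl_cont with (g' s); auto. Qed.

Lemma mvt_bound (g g' : R -> R) x y M :
  (forall s, Rmin x y <= s <= Rmax x y -> derivable_pt_lim g s (g' s)) ->
  (forall s, Rmin x y <= s <= Rmax x y -> Rabs (g' s) <= M) ->
  Rabs (g y - g x) <= M * Rabs (y - x).
Proof. intros H1 H2. destruct (mvt_eq g g' x y H1) as [c [Hc E]]. rewrite E, Rabs_mult.
  apply Rmult_le_compat_r; [apply Rabs_pos| auto]. Qed.

Lemma mvt_nonincr (g g' : R -> R) x y : x <= y ->
  (forall s, x <= s <= y -> derivable_pt_lim g s (g' s)) ->
  (forall s, x <= s <= y -> g' s <= 0) -> g y <= g x.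
Proof. intros Hxy H1 H2.
  destruct (mvt_eq g g' x y) as [c [Hc E]].
  - rewrite Rmin_left, Rmax_right by auto. auto.
  - rewrite Rmin_left, Rmax_right in Hc by auto. specialize (H2 c Hc). nra. Qed.

Lemma deriv0_const (g : R -> R) : (forall s, derivable_pt_lim g s 0) -> forall x y, g x = g y.
Proof. intros H x y. destruct (mvt_eq g (fun _ => 0) y x) as [c [_ E]]. intros; auto. lra. Qed.

Lemma dpl_sumL {A} (l : list A) (F : R -> A -> R) (F' : A -> R) t :
  (forall k, In k l -> derivable_pt_lim (fun s => F s k) t (F' k)) ->
  derivable_pt_lim (fun s => sumL l (F s)) t (sumL l F').
Proof. induction l; intros H.
  - unfold sumL; simpl. apply derivable_pt_lim_const.
  - apply (derivable_pt_lim_plus (fun s => F s a) (fun s => sumL l (F s))).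
    apply H; left; auto. apply IHl; intros; apply H; right; auto. Qed.

Definition hneg (x : R) := Rmin x 0 * Rmin x 0.

Lemma hneg_der x : derivable_pt_lim hneg x (2 * Rmin x 0).
Proof. intros eps He. exists (mkposreal eps He). intros h Hh Hlt. simpl in Hlt.
  unfold hneg. assert (B : Rabs (Rmin (x+h) 0 * Rmin (x+h) 0 - Rmin x 0 * Rmin x 0 - 2 * Rmin x 0 * h) <= h * h).
  { unfold Rmin; destruct (Rle_dec (x+h) 0); destruct (Rle_dec x 0); apply Rabs_le; split; nra. }
  replace ((Rmin (x + h) 0 * Rmin (x + h) 0 - Rmin x 0 * Rmin x 0) / h - 2 * Rmin x 0)
    with ((Rmin (x + h) 0 * Rmin (x + h) 0 - Rmin x 0 * Rmin x 0 - 2 * Rmin x 0 * h) / h) by (field; auto).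
  unfold Rdiv. rewrite Rabs_mult, Rabs_inv.
  assert (0 < Rabs h) by (apply Rabs_pos_lt; auto).
  apply Rle_lt_trans with (Rabs h). apply Rmult_le_reg_r with (Rabs h); auto.
  rewrite Rmult_assoc, Rinv_l by lra. rewrite Rmult_1_r.
  replace (Rabs h * Rabs h) with (h * h) by (rewrite <- Rabs_mult; rewrite Rabs_right; nra). auto. auto. Qed.

Lemma quad_form (M : nat -> R) n : M 0%nat = 0 ->
  sumL (seq 1 n) (fun k => M k * (M (S k) + M (k - 1)%nat - 2 * M k)) <= M n * M (S n) - M n * M n.
Proof. intros H0. induction n.
  - simpl. rewrite H0. unfold sumL; simpl. lra.
  - rewrite seq_S, sumL_app. replace (1 + n)%nat with (S n) by lia. rewrite sumL_cons, sumL_nil.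
    replace (S n - 1)%nat with n by lia. pose proof (pow2_ge_0 (M n - M (S n))). nra. Qed.

Section PL.
Variable a : R.
Hypothesis Ha : 0 <= a.

Lemma PL (N : nat) (w : R -> nat -> R) :
  (forall t, 0 <= t -> 0 <= w t 0%nat /\ 0 <= w t (S N)) ->
  (forall t k, (1 <= k <= N)%nat ->
     derivable_pt_lim (fun s => w s k) t (a * (w t (S k) + w t (k - 1)%nat - 2 * w t k))) ->
  (forall k, (1 <= k <= N)%nat -> 0 <= w 0 k) ->
  forall t k, 0 <= t -> (1 <= k <= N)%nat -> 0 <= w t k.
Proof.
  intros Hb Hd Hi t k Ht Hk.
  set (E := fun s => sumL (seq 1 N) (fun j => hneg (w s j))).
  set (E' := fun s => sumL (seq 1 N) (fun j => 2 * Rmin (w s j) 0 * (a * (w s (S j) + w s (j - 1)%nat - 2 * w s j)))).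
  assert (Hder : forall s, derivable_pt_lim E s (E' s)).
  { intros s. unfold E, E'. apply (dpl_sumL (seq 1 N) (fun s j => hneg (w s j))).
    intros j Hj. apply in_seq in Hj.
    apply (derivable_pt_lim_comp (fun s => w s j) hneg). apply Hd; lia. apply hneg_der. }
  assert (HE' : forall s, 0 <= s -> E' s <= 0).
  { intros s Hs. set (M := fun j => if (j =? 0)%nat then 0 else if (j =? S N)%nat then 0 else Rmin (w s j) 0).
    assert (M0 : M 0%nat = 0) by reflexivity.
    assert (MN : M (S N) = 0) by (unfold M; rewrite Nat.eqb_refl; destruct (S N =? 0)%nat; auto).
    assert (Mle : forall j, M j <= w s j).
    { intros j. unfold M. destruct (j =? 0)%nat eqn:E0. apply Nat.eqb_eq in E0; subst; apply Hb; auto.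
      destruct (j =? S N)%nat eqn:E1. apply Nat.eqb_eq in E1; subst; apply Hb; auto. apply Rmin_l. }
    assert (Mk : forall j, (1 <= j <= N)%nat -> M j = Rmin (w s j) 0).
    { intros j Hj. unfold M. destruct (j =? 0)%nat eqn:E0. apply Nat.eqb_eq in E0; lia.
      destruct (j =? S N)%nat eqn:E1. apply Nat.eqb_eq in E1; lia. auto. }
    apply Rle_trans with (2 * a * sumL (seq 1 N) (fun j => M j * (M (S j) + M (j - 1)%nat - 2 * M j))).
    - unfold E'. rewrite <- sumL_scal. apply sumL_le. intros j Hj. apply in_seq in Hj.
      rewrite Mk by lia. pose proof (Mle (S j)). pose proof (Mle (j - 1)%nat).
      assert (Rmin (w s j) 0 <= 0) by apply Rmin_r.
      assert (Rmin (w s j) 0 * w s j = Rmin (w s j) 0 * Rmin (w s j) 0)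
        by (unfold Rmin; destruct (Rle_dec (w s j) 0); lra).
      set (r := Rmin (w s j) 0) in *.
      assert (r * w s (S j) <= r * M (S j)) by nra.
      assert (r * w s (j-1)%nat <= r * M (j-1)%nat) by nra.
      assert (0 <= a * (r * M (S j) - r * w s (S j) + (r * M (j-1)%nat - r * w s (j-1)%nat))) by (apply Rmult_le_pos; lra).
      nra.
    - pose proof (quad_form M N M0). rewrite MN in H. nra. }
  assert (HE0 : E 0 = 0).
  { unfold E. rewrite (sumL_ext _ _ (fun _ => 0)). apply sumL_zero. intros j Hj. apply in_seq in Hj.
    unfold hneg. rewrite Rmin_right. ring. apply Hi; lia. }
  assert (HEt : E t <= 0).
  { rewrite <- HE0. apply mvt_nonincr with E'; auto. intros s Hs. apply HE'. lra. }
  assert (Hz : hneg (w t k) = 0).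
  { apply (sumL_nonneg_zero (seq 1 N) (fun j => hneg (w t j))). intros; unfold hneg; nra.
    apply Rle_antisym; auto. apply sumL_nonneg. intros; unfold hneg; nra. apply in_seq; lia. }
  unfold hneg in Hz. unfold Rmin in Hz. destruct (Rle_dec (w t k) 0); nra.
Qed.
End PL.

Lemma sum_f_R0_last (g : nat -> R) m : (forall j, (j < m)%nat -> g j = 0) -> sum_f_R0 g m = g m.
Proof. induction m; intros H; simpl; auto. rewrite IHm. rewrite H by lia. ring. intros; apply H; lia. Qed.

Lemma lapN_eq a u k : lapN a u k =
  match k with O => 0 | S _ => a * (u (S k) + u (k - 1)%nat - 2 * u k) end.
Proof. unfold lapN. destruct k as [|m].
  - simpl. unfold q0; simpl. ring.
  - cbn [sum_f_R0]. rewrite sum_f_R0_last.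
    + replace (S m - 1)%nat with m by lia.
      assert (E1 : q0 a (S m) m = a) by (unfold q0; simpl; rewrite Nat.eqb_refl; auto).
      assert (E2 : q0 a (S m) (S (S m)) = a).
      { unfold q0; simpl. rewrite Nat.eqb_refl. destruct (m =? S (S m))%nat eqn:E; auto. }
      rewrite E1, E2. ring.
    + intros j Hj. unfold q0. simpl.
      destruct (m =? j)%nat eqn:E. apply Nat.eqb_eq in E; lia.
      destruct (j =? S (S m))%nat eqn:E'. apply Nat.eqb_eq in E'; lia. simpl. ring.
Qed.

Section Sol.
Variable a : R.
Hypothesis Ha : 0 <= a.

Definition isSol (N : nat) (U : R -> nat -> R) : Prop :=
  (forall t k, (N < k)%nat -> U t k = 0) /\ (forall t, U t 0%nat = 0) /\
  (forall k, (k <= N)%nat -> U 0 k = ind_pos k) /\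
  (forall t k, (1 <= k <= N)%nat ->
     derivable_pt_lim (fun s => U s k) t (a * (U t (S k) + U t (k - 1)%nat - 2 * U t k))).

Lemma dir_isSol N U : dirichlet_sol a N ind_pos U -> isSol N U.
Proof. intros [H1 [H2 H3]]. split; auto. split; [|split; auto].
  - intros t. assert (E : forall x y, U x 0%nat = U y 0%nat).
    { apply (deriv0_const (fun s => U s 0%nat)). intros s. pose proof (H3 s 0%nat ltac:(lia)) as D.
      rewrite lapN_eq in D. auto. }
    rewrite (E t 0). rewrite H2 by lia. reflexivity.
  - intros t k Hk. pose proof (H3 t k ltac:(lia)) as D. rewrite lapN_eq in D. destruct k; [lia|auto]. Qed.

Lemma isSol_dir N U : isSol N U -> dirichlet_sol a N ind_pos U.
Proof. intros [H1 [H2 [H3 H4]]]. split; auto. split; auto. intros t k Hk. rewrite lapN_eq.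
  destruct k as [|k].
  - replace (fun s => U s 0%nat) with (fct_cte 0). apply derivable_pt_lim_const.
    apply functional_extensionality; intros; rewrite H2; reflexivity.
  - apply H4; lia. Qed.

Definition Aop (N : nat) (g : nat -> R) (k : nat) : R :=
  if andb (1 <=? k)%nat (k <=? N)%nat then a * (g (S k) + g (k - 1)%nat - 2 * g k) else 0.
Definition f0 (N : nat) (k : nat) : R := if (k <=? N)%nat then ind_pos k else 0.
Definition it (N m : nat) : nat -> R := Nat.iter m (Aop N) (f0 N).
Definition coef (N k m : nat) : R := it N m k / INR (Factorial.fact m).
Definition Usol (N : nat) (t : R) (k : nat) : R := PSeries (coef N k) t.

Lemma it_out N m k : (N < k)%nat -> it N m k = 0.
Proof. intros H. destruct m; simpl.
  - unfold f0. destruct (k <=? N)%nat eqn:E; auto. apply Nat.leb_le in E; lia.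
  - unfold Aop. destruct (k <=? N)%nat eqn:E. apply Nat.leb_le in E; lia.
    rewrite Bool.andb_false_r; auto. Qed.

Lemma it_0 N m : it N m 0%nat = 0.
Proof. destruct m; simpl. unfold f0; destruct (0 <=? N)%nat; auto. unfold Aop; simpl; auto. Qed.

Lemma it_bound N m k : Rabs (it N m k) <= (4 * a) ^ m.
Proof. revert k. induction m; intros k; simpl.
  - unfold f0, ind_pos. destruct (k <=? N)%nat; destruct (0 <? k)%nat; rewrite ?Rabs_R1, ?Rabs_R0; lra.
  - unfold Aop. fold (it N m). destruct (andb (1 <=? k)%nat (k <=? N)%nat).
    + rewrite Rabs_mult, (Rabs_right a) by lra.
      pose proof (IHm (S k)); pose proof (IHm (k-1)%nat); pose proof (IHm k).
      assert (Rabs (it N m (S k) + it N m (k - 1)%nat - 2 * it N m k) <= 4 * (4 * a) ^ m).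
      { eapply Rle_trans. apply Rabs_triang. eapply Rle_trans. apply Rplus_le_compat_r. apply Rabs_triang.
        rewrite Rabs_Ropp, Rabs_mult, (Rabs_right 2) by lra. lra. }
      replace (4 * a * (4 * a) ^ m) with (a * (4 * (4 * a) ^ m)) by ring. apply Rmult_le_compat_l; lra.
    + rewrite Rabs_R0. apply Rmult_le_pos; [lra| apply pow_le; lra]. Qed.

Lemma coef_disk N k r : CV_disk (coef N k) r.
Proof. unfold CV_disk.
  assert (Hexp : ex_series (fun n => (4 * a * Rabs r) ^ n / INR (Factorial.fact n))).
  { exists (exp (4 * a * Rabs r)). pose proof (is_exp_Reals (4 * a * Rabs r)) as H.
    unfold is_pseries in H. eapply is_series_ext; [|exact H]. intros n. simpl.
    rewrite pow_n_pow. unfold scal; simpl. unfold mult; simpl. unfold Rdiv. ring. }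
  apply (@ex_series_le R_AbsRing R_CompleteNormedModule _ (fun n : nat => (4 * a * Rabs r) ^ n / INR (Factorial.fact n))); [|exact Hexp]. intros n. unfold norm; simpl. unfold abs; simpl.
  rewrite Rabs_Rabsolu. unfold coef. rewrite Rabs_mult. unfold Rdiv. rewrite Rabs_mult, <- RPow_abs.
  rewrite (Rabs_right (/ INR (Factorial.fact n))) by (apply Rle_ge, Rlt_le, Rinv_0_lt_compat, INR_fact_lt_0).
  rewrite Rpow_mult_distr. pose proof (it_bound N n k).
  assert (0 <= / INR (Factorial.fact n)) by (apply Rlt_le, Rinv_0_lt_compat, INR_fact_lt_0).
  assert (0 <= Rabs r ^ n) by (apply pow_le, Rabs_pos).
  replace ((4 * a) ^ n * Rabs r ^ n * / INR (Factorial.fact n)) with ((4 * a) ^ n * (/ INR (Factorial.fact n) * Rabs r ^ n)) by ring.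
  replace (Rabs (it N n k) * / INR (Factorial.fact n) * Rabs r ^ n) with (Rabs (it N n k) * (/ INR (Factorial.fact n) * Rabs r ^ n)) by ring.
  apply Rmult_le_compat_r; auto. apply Rmult_le_pos; auto. Qed.

Lemma coef_radius N k t : Rbar_lt (Rabs t) (CV_radius (coef N k)).
Proof. apply Rbar_lt_le_trans with (Rabs t + 1). simpl; lra.
  unfold CV_radius. destruct (Lub_Rbar_correct (CV_disk (coef N k))) as [H _]. apply H. apply coef_disk. Qed.

Lemma coef_ex N k t : ex_pseries (coef N k) t.
Proof. apply CV_radius_inside, coef_radius. Qed.

Lemma PSeries_zero (c : nat -> R) t : (forall n, c n = 0) -> PSeries c t = 0.
Proof. intros H. rewrite (PSeries_ext _ (fun _ => 0)) by auto. apply PSeries_const_0. Qed.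

Lemma PSeries_lin3 (c1 c2 c3 : nat -> R) t b :
  ex_pseries c1 t -> ex_pseries c2 t -> ex_pseries c3 t ->
  PSeries (fun n => b * (c1 n + c2 n - 2 * c3 n)) t =
  b * (PSeries c1 t + PSeries c2 t - 2 * PSeries c3 t).
Proof. intros E1 E2 E3. apply is_pseries_unique.
  apply PSeries_correct in E1, E2, E3.
  pose proof (is_pseries_scal (-2) c3 t _ (Rmult_comm _ _) E3) as F3.
  pose proof (is_pseries_plus _ _ t _ _ E1 E2) as F12.
  pose proof (is_pseries_plus _ _ t _ _ F12 F3) as F.
  pose proof (is_pseries_scal b _ t _ (Rmult_comm _ _) F) as G.
  eapply is_pseries_ext in G. 
  - replace (b * (PSeries c1 t + PSeries c2 t - 2 * PSeries c3 t)) with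
     (scal b (plus (plus (PSeries c1 t) (PSeries c2 t)) (scal (-2) (PSeries c3 t)))). exact G.
    unfold scal, plus; simpl. unfold mult, plus; simpl. ring.
  - intros n. unfold PS_scal, PS_plus, scal, plus; simpl. unfold mult, plus; simpl. ring. Qed.

Lemma Usol_isSol N : isSol N (Usol N).
Proof. split; [|split; [|split]].
  - intros t k Hk. unfold Usol. apply PSeries_zero. intros n. unfold coef. rewrite it_out by auto. unfold Rdiv; ring.
  - intros t. unfold Usol. apply PSeries_zero. intros n. unfold coef. rewrite it_0. unfold Rdiv; ring.
  - intros k Hk. unfold Usol. rewrite PSeries_0. unfold coef; simpl. unfold f0.
    replace (k <=? N)%nat with true by (symmetry; apply Nat.leb_le; auto). field.
  - intros t k Hk. unfold Usol. apply is_derive_Reals.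
    replace (a * (PSeries (coef N (S k)) t + PSeries (coef N (k - 1)) t - 2 * PSeries (coef N k) t))
      with (PSeries (PS_derive (coef N k)) t).
    apply is_derive_PSeries, coef_radius.
    rewrite <- PSeries_lin3 by apply coef_ex. apply PSeries_ext. intros n.
    unfold PS_derive, coef. change (it N (S n) k) with (Aop N (it N n) k). unfold Aop.
    replace (andb (1 <=? k)%nat (k <=? N)%nat) with true
      by (symmetry; apply andb_true_intro; split; apply Nat.leb_le; lia).
    rewrite fact_simpl, mult_INR. pose proof (INR_fact_lt_0 n). pose proof (pos_INR n).
    rewrite S_INR. field. split; lra.
Qed.

Lemma sol_exists N : exists U, dirichlet_sol a N ind_pos U.
Proof. exists (Usol N). apply isSol_dir, Usol_isSol. Qed.
End Sol.

End HeatPS.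
Import HeatPS.

Lemma dpl_ext (f g : R -> R) t l : (forall s, f s = g s) -> derivable_pt_lim g t l -> derivable_pt_lim f t l.
Proof. intros H D. replace f with g; auto. apply functional_extensionality; intros; auto. Qed.

Lemma dpl_cst (c t : R) : derivable_pt_lim (fun _ => c) t 0.
Proof. apply (derivable_pt_lim_const c t). Qed.

Lemma dpl_lin (t c x : R) : derivable_pt_lim (fun s => (s - t) * c) x c.
Proof. intros eps He. exists (mkposreal eps He). intros h Hh _.
  replace (((x + h - t) * c - (x - t) * c) / h - c) with 0 by (field; auto). rewrite Rabs_R0; auto. Qed.

Section Props.
Variable a : R.
Hypothesis Ha : 0 <= a.
Variable N : nat.
Variable U : R -> nat -> R.
Hypothesis HU : isSol a N U.

Lemma U_out t k : (N < k)%nat -> U t k = 0. Proof. apply HU. Qed.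
Lemma U_0 t : U t 0%nat = 0. Proof. apply HU. Qed.

Lemma U_nonneg t k : 0 <= t -> 0 <= U t k.
Proof. intros Ht. destruct k as [|k]. rewrite U_0; lra.
  destruct (Nat.le_gt_cases (S k) N). apply (PL a Ha N U); auto; try lia.
  - intros s _. rewrite U_0, U_out by lia. lra.
  - apply HU.
  - intros j Hj. destruct HU as [_ [_ [H3 _]]]. rewrite H3 by lia. unfold ind_pos. destruct (0 <? j)%nat; lra.
  - rewrite U_out by lia; lra. Qed.

Lemma U_le1 t k : 0 <= t -> U t k <= 1.
Proof. intros Ht. destruct k as [|k]. rewrite U_0; lra.
  destruct (Nat.le_gt_cases (S k) N).
  - assert (0 <= 1 - U t (S k)); [|lra].
    apply (PL a Ha N (fun s j => 1 - U s j)); auto; try lia.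
    + intros s _. rewrite U_0, U_out by lia. lra.
    + intros s j Hj. destruct HU as [_ [_ [_ H4]]]. specialize (H4 s j Hj).
      replace (a * (1 - U s (S j) + (1 - U s (j - 1)%nat) - 2 * (1 - U s j)))
        with (0 - a * (U s (S j) + U s (j - 1)%nat - 2 * U s j)) by ring.
      apply (derivable_pt_lim_minus (fun _ => 1) (fun s => U s j)); auto. apply dpl_cst.
    + intros j Hj. destruct HU as [_ [_ [H3 _]]]. rewrite H3 by lia. unfold ind_pos. destruct (0 <? j)%nat; lra.
  - rewrite U_out by lia; lra. Qed.

Definition sigU (s : R) (j : nat) : R :=
  if andb (1 <=? j)%nat (j <=? N)%nat then U s (S j) + U s (j - 1)%nat - 2 * U s j else 0.

Lemma sig_in s j : (1 <= j <= N)%nat -> sigU s j = U s (S j) + U s (j - 1)%nat - 2 * U s j.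
Proof. intros H. unfold sigU. replace (andb (1 <=? j)%nat (j <=? N)%nat) with true; auto.
  symmetry; apply andb_true_intro; split; apply Nat.leb_le; lia. Qed.
Lemma sig_out s j : ~ (1 <= j <= N)%nat -> sigU s j = 0.
Proof. intros H. unfold sigU. destruct (1 <=? j)%nat eqn:E1; destruct (j <=? N)%nat eqn:E2; simpl; auto.
  apply Nat.leb_le in E1, E2. lia. Qed.

Lemma U_der t i : derivable_pt_lim (fun s => U s i) t (a * sigU t i).
Proof. destruct (classic (1 <= i <= N)%nat) as [H|H].
  - rewrite sig_in by auto. apply HU; auto.
  - rewrite sig_out by auto. rewrite Rmult_0_r. apply (dpl_ext _ (fun _ => 0)); [|apply dpl_cst].
    intros s. destruct i. apply U_0. apply U_out. lia. Qed.

Lemma sig_der t j : (1 <= j <= N)%nat ->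
  derivable_pt_lim (fun s => sigU s j) t (a * (sigU t (S j) + sigU t (j - 1)%nat - 2 * sigU t j)).
Proof. intros H. apply (dpl_ext _ (fun s => U s (S j) + U s (j - 1)%nat - 2 * U s j)).
  intros; apply sig_in; auto.
  replace (a * (sigU t (S j) + sigU t (j - 1)%nat - 2 * sigU t j)) with
    (a * sigU t (S j) + a * sigU t (j - 1)%nat - 2 * (a * sigU t j)) by ring.
  apply (derivable_pt_lim_minus (fun s => U s (S j) + U s (j - 1)%nat) (fun s => 2 * U s j)).
  apply (derivable_pt_lim_plus (fun s => U s (S j)) (fun s => U s (j - 1)%nat)); apply U_der.
  apply (derivable_pt_lim_scal (fun s => U s j)). apply U_der. Qed.

Lemma sig_nonpos t j : 0 <= t -> sigU t j <= 0.
Proof. intros Ht. destruct (classic (1 <= j <= N)%nat) as [H|H]; [|rewrite sig_out; auto; lra].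
  assert (0 <= - sigU t j); [|lra].
  apply (PL a Ha N (fun s j => - sigU s j)); auto.
  - intros s _. rewrite !sig_out by lia. lra.
  - intros s i Hi. replace (a * (- sigU s (S i) + - sigU s (i - 1)%nat - 2 * - sigU s i)) with
      (- (a * (sigU s (S i) + sigU s (i - 1)%nat - 2 * sigU s i))) by ring.
    apply (derivable_pt_lim_opp (fun s => sigU s i)). apply sig_der; auto.
  - intros i Hi. rewrite sig_in by auto. destruct HU as [_ [_ [H3 _]]].
    rewrite (H3 i) by lia. rewrite (H3 (i-1)%nat) by lia.
    assert (U 0 (S i) <= 1) by (apply U_le1; lra).
    assert (ind_pos i = 1) by (unfold ind_pos; replace (0 <? i)%nat with true; auto; symmetry; apply Nat.ltb_lt; lia).
    assert (ind_pos (i - 1)%nat <= 1) by (unfold ind_pos; destruct (0 <? i - 1)%nat; lra). lra. Qed.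

Lemma sig_bound t j : 0 <= t -> Rabs (sigU t j) <= 4.
Proof. intros Ht. destruct (classic (1 <= j <= N)%nat) as [H|H]; [|rewrite sig_out, Rabs_R0; auto; lra].
  rewrite sig_in by auto. pose proof (U_nonneg t (S j) Ht). pose proof (U_nonneg t (j-1)%nat Ht).
  pose proof (U_nonneg t j Ht). pose proof (U_le1 t (S j) Ht). pose proof (U_le1 t (j-1)%nat Ht).
  pose proof (U_le1 t j Ht). apply Rabs_le; lra. Qed.

Lemma U_taylor t h n : 0 <= t -> 0 <= t + h -> (1 <= n <= N)%nat ->
  Rabs (U (t + h) n - U t n - h * (a * sigU t n)) <= 16 * a * a * (h * h).
Proof. intros Ht Hth Hn.
  set (g := fun s => U s n - (s - t) * (a * sigU t n)).
  assert (Hmin : forall s, Rmin t (t + h) <= s -> 0 <= s) by (intros s Hs; unfold Rmin in Hs; destruct (Rle_dec t (t+h)); lra).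
  assert (B : Rabs (g (t + h) - g t) <= (16 * a * a * Rabs h) * Rabs (t + h - t)).
  { apply mvt_bound with (g' := fun s => a * sigU s n - a * sigU t n).
    - intros s Hs. unfold g. apply (derivable_pt_lim_minus (fun s => U s n) (fun s => (s - t) * (a * sigU t n))).
      apply U_der. apply dpl_lin.
    - intros s Hs. replace (a * sigU s n - a * sigU t n) with (a * (sigU s n - sigU t n)) by ring.
      rewrite Rabs_mult, (Rabs_right a) by lra.
      assert (Rabs (sigU s n - sigU t n) <= (16 * a) * Rabs (s - t)).
      { assert (0 <= s) by (apply Hmin; lra).
        apply (mvt_bound (fun s => sigU s n) (fun s => a * (sigU s (S n) + sigU s (n - 1)%nat - 2 * sigU s n)) t s).
        - intros s' Hs'. apply sig_der; auto.
        - intros s' Hs'. assert (0 <= s'). { unfold Rmin in Hs'. destruct (Rle_dec t s); lra. }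
          rewrite Rabs_mult, (Rabs_right a) by lra.
          pose proof (sig_bound s' (S n) H0). pose proof (sig_bound s' (n-1)%nat H0). pose proof (sig_bound s' n H0).
          assert (Rabs (sigU s' (S n) + sigU s' (n - 1)%nat - 2 * sigU s' n) <= 16).
          { eapply Rle_trans. apply Rabs_triang. eapply Rle_trans. apply Rplus_le_compat_r. apply Rabs_triang.
            rewrite Rabs_Ropp, Rabs_mult, (Rabs_right 2) by lra. lra. }
          nra. }
      assert (Rabs (s - t) <= Rabs h).
      { unfold Rmin, Rmax in Hs. destruct (Rle_dec t (t+h)); unfold Rabs;
        destruct (Rcase_abs (s - t)); destruct (Rcase_abs h); lra. }
      assert (0 <= Rabs (s - t)) by apply Rabs_pos. nra. }
  unfold g in B.
  replace (U (t + h) n - (t + h - t) * (a * sigU t n) - (U t n - (t - t) * (a * sigU t n)))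
    with (U (t + h) n - U t n - h * (a * sigU t n)) in B by ring.
  replace (t + h - t) with h in B by ring.
  assert (E : Rabs h * Rabs h = h * h) by (rewrite <- Rabs_mult, Rabs_pos_eq; nra).
  replace (16 * a * a * Rabs h * Rabs h) with (16 * a * a * (h * h)) in B. exact B.
  rewrite <- E. ring. Qed.

End Props.

Lemma isSol_mono a N U U' : 0 <= a -> isSol a N U -> isSol a (S N) U' -> forall t k, 0 <= t -> U t k <= U' t k.
Proof. intros Ha HU HU' t k Ht. destruct k as [|k]. rewrite (U_0 a N U HU), (U_0 a (S N) U' HU'); lra.
  destruct (Nat.le_gt_cases (S k) N).
  - assert (0 <= U' t (S k) - U t (S k)); [|lra].
    apply (PL a Ha N (fun s j => U' s j - U s j)); auto; try lia.
    + intros s Hs. rewrite (U_0 a N U HU), (U_0 a (S N) U' HU'), (U_out a N U HU) by lia.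
      pose proof (U_nonneg a Ha (S N) U' HU' s (S N) Hs). lra.
    + intros s j Hj. replace (a * (U' s (S j) - U s (S j) + (U' s (j - 1)%nat - U s (j - 1)%nat) - 2 * (U' s j - U s j)))
        with (a * (U' s (S j) + U' s (j - 1)%nat - 2 * U' s j) - a * (U s (S j) + U s (j - 1)%nat - 2 * U s j)) by ring.
      apply (derivable_pt_lim_minus (fun s => U' s j) (fun s => U s j)). apply HU'; lia. apply HU; lia.
    + intros j Hj. destruct HU as [_ [_ [H3 _]]]. destruct HU' as [_ [_ [H3' _]]]. rewrite H3, H3' by lia. lra.
  - rewrite (U_out a N U HU) by lia. apply (U_nonneg a Ha (S N) U' HU'); auto. Qed.

Lemma isSol_uniq a N U U' : 0 <= a -> isSol a N U -> isSol a N U' -> forall t k, 0 <= t -> U t k <= U' t k.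
Proof. intros Ha HU HU' t k Ht. destruct k as [|k]. rewrite (U_0 a N U HU), (U_0 a N U' HU'); lra.
  destruct (Nat.le_gt_cases (S k) N).
  - assert (0 <= U' t (S k) - U t (S k)); [|lra].
    apply (PL a Ha N (fun s j => U' s j - U s j)); auto; try lia.
    + intros s Hs. rewrite (U_0 a N U HU), (U_0 a N U' HU'), (U_out a N U HU), (U_out a N U' HU') by lia. lra.
    + intros s j Hj. replace (a * (U' s (S j) - U s (S j) + (U' s (j - 1)%nat - U s (j - 1)%nat) - 2 * (U' s j - U s j)))
        with (a * (U' s (S j) + U' s (j - 1)%nat - 2 * U' s j) - a * (U s (S j) + U s (j - 1)%nat - 2 * U s j)) by ring.
      apply (derivable_pt_lim_minus (fun s => U' s j) (fun s => U s j)). apply HU'; lia. apply HU; lia.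
    + intros j Hj. destruct HU as [_ [_ [H3 _]]]. destruct HU' as [_ [_ [H3' _]]]. rewrite H3, H3' by lia. lra.
  - rewrite (U_out a N U HU), (U_out a N U' HU') by lia. lra. Qed.

Lemma lim_le (x : nat -> R) l B N0 : Un_cv x l -> (forall N, (N0 <= N)%nat -> x N <= B) -> l <= B.
Proof. intros H Hb. destruct (Rle_dec l B) as [|n]; auto. exfalso.
  destruct (H (l - B)) as [N HN]. lra. specialize (HN (max N N0) ltac:(lia)). specialize (Hb (max N N0) ltac:(lia)).
  unfold R_dist in HN. apply Rabs_def2 in HN. lra. Qed.

Lemma lim_ge (x : nat -> R) l B N0 : Un_cv x l -> (forall N, (N0 <= N)%nat -> B <= x N) -> B <= l.
Proof. intros H Hb. destruct (Rle_dec B l) as [|n]; auto. exfalso.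
  destruct (H (B - l)) as [N HN]. lra. specialize (HN (max N N0) ltac:(lia)). specialize (Hb (max N N0) ltac:(lia)).
  unfold R_dist in HN. apply Rabs_def2 in HN. lra. Qed.

Lemma cv_const c : Un_cv (fun _ => c) c.
Proof. intros eps He. exists 0%nat. intros. unfold R_dist. rewrite Rminus_diag_eq, Rabs_R0; auto. Qed.

Lemma cv_scal (x : nat -> R) l c : Un_cv x l -> Un_cv (fun N => c * x N) (c * l).
Proof. intros H. apply (CV_mult (fun _ => c) x); auto. apply cv_const. Qed.

Lemma Rabs_le_between x B : Rabs x <= B -> - B <= x <= B.
Proof. unfold Rabs; destruct (Rcase_abs x); intros; lra. Qed.

Section Phi.
Variable a : R.
Hypothesis Ha : 0 <= a.

Lemma phi_lim t n : 0 <= t -> Un_cv (fun N => Usol a N t n) (phi a t n).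
Proof. intros Ht.
  destruct (growing_cv (fun N => Usol a N t n)) as [l Hl].
  - intros N. apply (isSol_mono a N); auto; apply Usol_isSol; auto.
  - exists 1. intros x [i ->]. apply (U_le1 a Ha i); auto. apply Usol_isSol; auto.
  - assert (Hm : heat_min a ind_pos t n l).
    { split. intros N; apply sol_exists; auto.
      intros U HU. replace (fun N => U N t n) with (fun N => Usol a N t n); auto.
      apply functional_extensionality; intros N. apply Rle_antisym.
      apply (isSol_uniq a N); auto. apply Usol_isSol; auto. apply dir_isSol; auto.
      apply (isSol_uniq a N); auto. apply dir_isSol; auto. apply Usol_isSol; auto. }
    assert (Hp : heat_min a ind_pos t n (phi a t n)) by (unfold phi; apply epsilon_spec; eauto).
    apply Hp. intros N. apply isSol_dir, Usol_isSol; auto. Qed.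

Lemma phi_0 t : 0 <= t -> phi a t 0%nat = 0.
Proof. intros Ht. apply (UL_sequence (fun N => Usol a N t 0%nat)). apply phi_lim; auto.
  replace (fun N => Usol a N t 0%nat) with (fun _ : nat => 0). apply cv_const.
  apply functional_extensionality; intros N. symmetry; apply (U_0 a N); apply Usol_isSol; auto. Qed.

Lemma phi_nonneg t n : 0 <= t -> 0 <= phi a t n.
Proof. intros Ht. apply (lim_ge _ _ _ 0 (phi_lim t n Ht)). intros N _. apply (U_nonneg a Ha N); auto. apply Usol_isSol; auto. Qed.

Definition Sphi t n := phi a t (S n) + phi a t (n - 1)%nat - 2 * phi a t n.

Lemma Sphi_lim t n : 0 <= t -> Un_cv (fun N => Usol a N t (S n) + Usol a N t (n - 1)%nat - 2 * Usol a N t n) (Sphi t n).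
Proof. intros Ht. unfold Sphi. apply CV_minus. apply CV_plus; apply phi_lim; auto. apply cv_scal, phi_lim; auto. Qed.

Lemma phi_concave t n : 0 <= t -> (1 <= n)%nat -> Sphi t n <= 0.
Proof. intros Ht Hn. apply (lim_le _ _ _ n (Sphi_lim t n Ht)). intros N HN.
  rewrite <- (sig_in N (Usol a N)) by lia. apply (sig_nonpos a Ha N); auto. apply Usol_isSol; auto. Qed.

Lemma phi_mono t n : 0 <= t -> phi a t n <= phi a t (S n).
Proof. intros Ht. destruct (Rle_dec (phi a t n) (phi a t (S n))) as [|Hn]; auto. exfalso.
  set (d := phi a t n - phi a t (S n)).
  assert (Hd : 0 < d) by (unfold d; lra).
  assert (K : forall k, phi a t (S (n + k)) - phi a t (n + k) <= - d /\ phi a t (n + k) <= phi a t n - INR k * d).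
  { induction k. rewrite Nat.add_0_r. simpl. unfold d. lra.
    destruct IHk as [I1 I2]. pose proof (phi_concave t (S (n + k)) Ht ltac:(lia)) as C. unfold Sphi in C.
    replace (S (n + k) - 1)%nat with (n + k)%nat in C by lia. replace (n + S k)%nat with (S (n + k)) by lia.
    rewrite S_INR. split; lra. }
  destruct (INR_unbounded (phi a t n / d)) as [k Hk].
  destruct (K k) as [_ K2]. pose proof (phi_nonneg t (n + k) Ht).
  apply Rgt_lt in Hk. apply (Rmult_lt_compat_r d) in Hk; auto. unfold Rdiv in Hk.
  rewrite Rmult_assoc, Rinv_l in Hk by lra. lra. Qed.

Lemma phi_taylor t h n : 0 <= t -> 0 <= t + h -> (1 <= n)%nat ->
  Rabs (phi a (t + h) n - phi a t n - h * (a * Sphi t n)) <= 16 * a * a * (h * h).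
Proof. intros Ht Hth Hn.
  assert (L : Un_cv (fun N => Usol a N (t + h) n - Usol a N t n - h * (a * (Usol a N t (S n) + Usol a N t (n - 1)%nat - 2 * Usol a N t n)))
            (phi a (t + h) n - phi a t n - h * (a * Sphi t n))).
  { apply CV_minus. apply CV_minus; apply phi_lim; auto. apply cv_scal, cv_scal, Sphi_lim; auto. }
  apply Rabs_le. split.
  - apply (lim_ge _ _ _ n L). intros N HN. rewrite <- (sig_in N (Usol a N)) by lia.
    pose proof (U_taylor a Ha N (Usol a N) (Usol_isSol a Ha N) t h n Ht Hth ltac:(lia)) as T.
    destruct (Rabs_le_between _ _ T) as [T1 T2]; lra.
  - apply (lim_le _ _ _ n L). intros N HN. rewrite <- (sig_in N (Usol a N)) by lia.
    pose proof (U_taylor a Ha N (Usol a N) (Usol_isSol a Ha N) t h n Ht Hth ltac:(lia)) as T.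
    destruct (Rabs_le_between _ _ T) as [T1 T2]; lra. Qed.

Lemma phi_deriv t n : 0 < t -> (1 <= n)%nat -> derivable_pt_lim (fun s => phi a s n) t (a * Sphi t n).
Proof. intros Ht Hn eps He.
  assert (Hc : 0 < 16 * a * a + 1) by nra.
  assert (Hd : 0 < Rmin t (eps / (16 * a * a + 1))) by (apply Rmin_pos; auto; apply Rdiv_lt_0_compat; auto).
  exists (mkposreal _ Hd). intros h Hh Hlt. simpl in Hlt.
  assert (Hlt1 : Rabs h < t) by (eapply Rlt_le_trans; [exact Hlt| apply Rmin_l]).
  assert (Hlt2 : Rabs h < eps / (16 * a * a + 1)) by (eapply Rlt_le_trans; [exact Hlt| apply Rmin_r]).
  assert (Hth : 0 <= t + h) by (unfold Rabs in Hlt1; destruct (Rcase_abs h); lra).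
  pose proof (phi_taylor t h n ltac:(lra) Hth Hn) as T.
  assert (Hh' : 0 < Rabs h) by (apply Rabs_pos_lt; auto).
  replace ((phi a (t + h) n - phi a t n) / h - a * Sphi t n) with
    ((phi a (t + h) n - phi a t n - h * (a * Sphi t n)) / h) by (field; auto).
  unfold Rdiv. rewrite Rabs_mult, Rabs_inv.
  assert (E : h * h = Rabs h * Rabs h) by (rewrite <- Rabs_mult, Rabs_pos_eq; nra).
  rewrite E in T.
  apply Rle_lt_trans with (16 * a * a * Rabs h).
  - apply Rmult_le_reg_r with (Rabs h); auto. rewrite Rmult_assoc, Rinv_l, Rmult_1_r by lra. nra.
  - apply Rmult_lt_compat_r with (r := 16 * a * a + 1) in Hlt2; auto.
    replace (eps / (16 * a * a + 1) * (16 * a * a + 1)) with eps in Hlt2 by (field; lra). nra. Qed.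

Lemma phi_deriv0 t : 0 < t -> derivable_pt_lim (fun s => phi a s 0%nat) t 0.
Proof. intros Ht eps He. exists (mkposreal t Ht). intros h Hh Hlt. simpl in Hlt.
  assert (Hth : 0 <= t + h) by (unfold Rabs in Hlt; destruct (Rcase_abs h); lra).
  rewrite !phi_0 by lra. replace ((0 - 0) / h - 0) with 0 by (field; auto). rewrite Rabs_R0; auto. Qed.
End Phi.

Lemma sumL_minus {A} (l : list A) f g : sumL l f - sumL l g = sumL l (fun p => f p - g p).
Proof. unfold Rminus. rewrite <- sumL_opp, <- sumL_plus. reflexivity. Qed.

Lemma qmin_nonneg V (q : V -> V -> R) qmin : is_graph q -> is_qmin q qmin -> 0 <= qmin.
Proof. intros Hg [_ H]. apply H. intros x y Hxy. apply Hg. Qed.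

Lemma diag_plan V (q : V -> V -> R) x : is_graph q -> connected q -> exists rho, is_plan q x x rho /\ cost q x x rho = 0.
Proof. intros Hg Hc.
  exists (fun p => if eqdec (fst p) (snd p) then (if eqdec (fst p) x then 0 else q x (fst p)) else 0).
  split; [split; [|split]|].
  - intros p. destruct (eqdec (fst p) (snd p)); [destruct (eqdec (fst p) x); [lra| apply Hg]| lra].
  - intros x' Hx'. exists (x' :: nil). split; [repeat constructor; auto|split].
    + intros y' H. cbn [fst snd] in H. destruct (eqdec x' y'); [left; auto| lra].
    + cbn [fst snd fold_right]. destruct (eqdec x' x'); [|congruence]. destruct (eqdec x' x); [congruence|ring].
  - intros y' Hy'. exists (y' :: nil). split; [repeat constructor; auto|split].
    + intros x' H. cbn [fst snd] in H. destruct (eqdec x' y'); [left; auto| lra].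
    + cbn [fst snd fold_right]. destruct (eqdec y' y'); [|congruence]. destruct (eqdec y' x); [congruence|ring].
  - unfold cost. apply fsum_spec. exists nil. split; [constructor| split; [|reflexivity]].
    intros p H. exfalso; apply H. destruct (eqdec (fst p) (snd p)) as [E|]; [|ring].
    destruct p as [u v]; cbn [fst snd] in *. subst v. rewrite !(gdist_refl V q Hc). ring.
Qed.

Theorem mainTheorem7 (V : Type) (q : V -> V -> R) (qmin : R)
    (qt : V * V -> V * V -> R) :
  countable V -> is_graph q -> reversible q -> connected q ->
  is_qmin q qmin -> nonneg_ollivier q -> perfect_coupling q qmin qt ->
  forall t : R, 0 < t -> forall x y : V,
    exists D : R,
      derivable_pt_lim (fun s => phi (2 * qmin) s (gdist q x y)) t D /\
      lap qt (fun p => phi (2 * qmin) t (gdist q (fst p) (snd p))) (x, y) <= D.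
Proof.
  intros _ Hg Hr Hc Hq Hk [[Hgt _] Hpc] t Ht x y.
  set (a := 2 * qmin). assert (Ha : 0 <= a) by (unfold a; pose proof (qmin_nonneg V q qmin Hg Hq); lra).
  destruct (Hpc x y) as [[Hplan Hopt] [Hmu Hmu1]].
  set (rho := qt (x, y)) in *.
  set (d0 := gdist q x y).
  set (Phi := phi a t).
  assert (rho_nn : forall p, 0 <= rho p) by (intros; apply Hgt).
  destruct (proj2 Hgt (x, y)) as [l0 Hl0]. destruct (nodup_list l0) as [P0 [NP0 EP0]].
  assert (CP0 : forall p, rho p <> 0 -> In p P0).
  { intros p H. apply EP0, Hl0. destruct (Rle_lt_or_eq_dec _ _ (rho_nn p)); auto. congruence. }
  set (I := fun k p => if Z.eq_dec (Z.of_nat (gdist q (fst p) (snd p)) - Z.of_nat d0)%Z k then rho p else 0).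
  assert (mu_eq : forall k, mu q x y rho k = sumL P0 (I k)).
  { intros k. unfold mu. apply fsum_list; auto. intros p H. apply CP0. intros E; apply H.
    destruct (Z.eq_dec _ k); auto. }
  assert (I_nn : forall k p, 0 <= I k p) by (intros; unfold I; destruct (Z.eq_dec _ k); auto; lra).
  assert (supp : forall p, rho p <> 0 -> (Z.abs (Z.of_nat (gdist q (fst p) (snd p)) - Z.of_nat d0) <= 1)%Z).
  { intros p H. destruct (Z_le_gt_dec (Z.abs (Z.of_nat (gdist q (fst p) (snd p)) - Z.of_nat d0)) 1) as [|G]; auto.
    exfalso. set (k := (Z.of_nat (gdist q (fst p) (snd p)) - Z.of_nat d0)%Z) in *.
    pose proof (Hmu k ltac:(lia)) as M. rewrite mu_eq in M.
    pose proof (sumL_nonneg_zero P0 (I k) (fun p _ => I_nn k p) M p (CP0 p H)) as Z0.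
    unfold I in Z0. destruct (Z.eq_dec _ k); [congruence| unfold k in n; lia]. }
  assert (cost_eq : cost q x y rho = mu q x y rho (-1)%Z - mu q x y rho 1%Z).
  { unfold cost. rewrite (fsum_list _ P0 NP0). rewrite !mu_eq. rewrite sumL_minus.
    apply sumL_ext. intros p _. unfold I. fold d0.
    destruct (Req_dec (rho p) 0) as [E|E]. rewrite E. destruct (Z.eq_dec _ (-1)); destruct (Z.eq_dec _ 1); ring.
    pose proof (supp p E).
    destruct (Z.eq_dec (Z.of_nat (gdist q (fst p) (snd p)) - Z.of_nat d0) (-1)) as [E1|E1];
    destruct (Z.eq_dec (Z.of_nat (gdist q (fst p) (snd p)) - Z.of_nat d0) 1) as [E2|E2]; try lia.
    + replace (INR d0) with (INR (gdist q (fst p) (snd p)) + 1). ring.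
      replace d0 with (S (gdist q (fst p) (snd p))) by lia. rewrite S_INR; ring.
    + replace (INR (gdist q (fst p) (snd p))) with (INR d0 + 1). ring.
      replace (gdist q (fst p) (snd p)) with (S d0) by lia. rewrite S_INR; ring.
    + replace (gdist q (fst p) (snd p)) with d0 by lia. ring.
    + intros p H. apply CP0. intros E; apply H; rewrite E; ring. }
  assert (lap_eq : lap qt (fun p => Phi (gdist q (fst p) (snd p))) (x, y) =
     (Phi (S d0) - Phi d0) * mu q x y rho 1%Z + (Phi (d0 - 1)%nat - Phi d0) * mu q x y rho (-1)%Z).
  { unfold lap. fold rho. rewrite (fsum_list _ P0 NP0). rewrite !mu_eq. rewrite <- !sumL_scal, <- sumL_plus.
    apply sumL_ext. intros p _. unfold I. cbn [fst snd]. fold d0. fold Phi.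
    destruct (Req_dec (rho p) 0) as [E|E]. rewrite E. destruct (Z.eq_dec _ (-1)); destruct (Z.eq_dec _ 1); ring.
    pose proof (supp p E).
    destruct (Z.eq_dec (Z.of_nat (gdist q (fst p) (snd p)) - Z.of_nat d0) (-1)) as [E1|E1];
    destruct (Z.eq_dec (Z.of_nat (gdist q (fst p) (snd p)) - Z.of_nat d0) 1) as [E2|E2]; try lia.
    + replace (gdist q (fst p) (snd p)) with (d0 - 1)%nat by lia. ring.
    + replace (gdist q (fst p) (snd p)) with (S d0) by lia. ring.
    + replace (gdist q (fst p) (snd p)) with d0 by lia. ring.
    + intros p H. apply CP0. intros E; apply H. cbn [fst snd]. rewrite E; ring. }
  assert (cost_nn : 0 <= cost q x y rho).
  { destruct (eqdec x y) as [<-|Hne].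
    - destruct (diag_plan V q x Hg Hc) as [r [Hr1 Hr2]]. rewrite <- Hr2. apply Hopt; auto.
    - destruct (proj2 Hg x) as [lx Hlx]. destruct (nbr_list x lx) as [X' [NX [CX _]]].
      destruct (proj2 Hg y) as [ly Hly]. destruct (nbr_list y ly) as [Y' [NY [CY _]]].
      destruct (plan_exists V q Hg Hr Hc Hk x y Hne X' Y' NX NY) as [r [Hr1 Hr2]].
      + intros z Hz. apply CX, Hlx; auto.
      + intros z Hz. apply CY, Hly; auto.
      + eapply Rle_trans; [exact Hr2| apply Hopt; auto]. }
  assert (mu1_nn : 0 <= mu q x y rho 1%Z) by (rewrite mu_eq; apply sumL_nonneg; auto).
  assert (Ht0 : 0 <= t) by lra.
  fold a. rewrite lap_eq.
  destruct (eqdec x y) as [<-|Hne].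
  - assert (d00 : d0 = 0%nat) by (unfold d0; apply (gdist_refl V q Hc)).
    exists 0. split. fold d0. rewrite d00. apply phi_deriv0; auto.
    rewrite d00. replace (0 - 1)%nat with 0%nat by lia. unfold Phi.
    assert (mum : mu q x x rho (-1)%Z = 0).
    { rewrite mu_eq. rewrite (sumL_ext P0 _ (fun _ => 0)). apply sumL_zero. intros p _. unfold I.
      destruct (Z.eq_dec _ (-1)); [lia| auto]. }
    rewrite cost_eq, mum in cost_nn. pose proof (phi_mono a Ha t 0 Ht0). nra.
  - assert (D1 : (1 <= d0)%nat) by (apply (gdist_pos V q Hc); auto).
    exists (a * Sphi a t d0). split. apply phi_deriv; auto.
    pose proof (phi_mono a Ha t d0 Ht0) as M. pose proof (phi_concave a Ha t d0 Ht0 D1) as Cc.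
    unfold Sphi in *. fold Phi in M, Cc |- *. rewrite cost_eq in cost_nn.
    assert (Hm1 : a <= mu q x y rho (-1)%Z) by (unfold a; apply Hmu1; auto).
    set (dp := Phi (S d0) - Phi d0) in *. set (dm := Phi d0 - Phi (d0 - 1)%nat).
    assert (dp <= dm) by (unfold dp, dm; lra).
    assert (0 <= dp) by (unfold dp; lra).
    set (m1 := mu q x y rho 1%Z) in *. set (mm := mu q x y rho (-1)%Z) in *.
    assert (0 <= (mm - a) * (dm - dp)) by (apply Rmult_le_pos; lra).
    assert (0 <= (mm - m1) * dp) by (apply Rmult_le_pos; lra).
    replace (Phi (d0 - 1)%nat - Phi d0) with (- dm) by (unfold dm; ring).
    replace (Phi (S d0) + Phi (d0 - 1)%nat - 2 * Phi d0) with (dp - dm) by (unfold dp, dm; ring).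
    nra.
Qed.
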